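(* Let $E$ be a separable Banach space and let $\{A(t)\}_{t\geq 0}$ be a family of linear operators in $E$. For $\lambda>0$ let $\{R^{(\lambda)}(t,s)\}_{t\geq s\geq 0}$ be a linear evolution system on $E$ corresponding to the problems $\dot u(t)=A(t/\lambda)u(t)$, $t>s$, $u(s)=\bar u\in E$. Suppose that (A1) there are $M\geq 1$ and $\omega\in\mathbb{R}$ such that $\|R^{(\lambda)}(t,s)\|\leq Me^{\omega(t-s)}$ for all $\lambda>0$ and $t\geq s\geq 0$; (A2) there exists a $C_0$ semigroup $\{\widehat S(t)\}_{t\geq 0}$ of bounded linear operators on $E$ with infinitesimal generator $\widehat A$ such that, for any $\bar u\in E$ and $t,s\geq 0$ with $t\geq s$, $\lim_{\lambda\to 0^+,\ \bar v\to\bar u} R^{(\lambda)}(t,s)\bar v=\widehat S(t-s)\bar u$, uniformly with respect to $t,s$ from bounded intervals; (A3) $F:[0,+\infty)\times E\to E$ is continuous, Lipschitz on bounded subsets of $E$ in the second variable uniformly with respect to $t\geq 0$, and has sublinear growth uniformly with respect to $t$, i.e. there is $c>0$ with $\|F(t,\bar v)\|\leq c(1+\|\bar v\|)$ for all $t\geq 0$, $\bar v\in E$; (A4) for each $\bar u\in E$ the set $\{F(t,\bar u)\mid t\geq 0\}$ is relatively compact, and there is a locally Lipschitz mapping $\widehat F:E\to E$ such that for any $\bar u\in E$ and $h>0$, $\widehat F(\bar u)=\lim_{T\to+\infty,\ \bar v\to\bar u}\frac{1}{T}\int_0^T F(\tau+h,\bar v)\,d\tau$, uniformly with respect to $h$.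 Then, for any sequences $(\lambda_n)$ in $(0,+\infty)$ and $(\bar u_n)$ in $E$ with $\lambda_n\to 0^+$ and $\bar u_n\to\bar u_0\in E$, the mild solutions $u_n:[0,+\infty)\to E$ of $\dot u(t)=A(t/\lambda_n)u(t)+F(t/\lambda_n,u(t))$, $t>0$, with $u_n(0)=\bar u_n$, converge uniformly on bounded intervals to the mild solution of the averaged problem $\dot u(t)=\widehat A u(t)+\widehat F(u(t))$, $t>0$, $u(0)=\bar u_0$.
   Context: An evolution system on $E$ is a family $\{R(t,s)\}_{t\geq s\geq 0}$ of bounded linear operators with $R(t,t)=I$, $R(t,s)R(s,r)=R(t,r)$ for $t\geq s\geq r\geq 0$, and $(s,t)\mapsto R(t,s)\bar u$ continuous for each $\bar u\in E$. A mild solution of $\dot u=A(t/\lambda)u+F(t/\lambda,u)$, $u(0)=\bar u$, on $[0,\omega)$ is a continuous $u:[0,\omega)\to E$ with $u(t)=R^{(\lambda)}(t,0)\bar u+\int_0^t R^{(\lambda)}(t,\tau)F(\tau/\lambda,u(\tau))\,d\tau$; for the averaged problem, mild solutions are defined with $\widehat S(t-\tau)$ in place of $R^{(\lambda)}(t,\tau)$ and $\widehat F(u(\tau))$ in place of $F(\tau/\lambda,u(\tau))$. *)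

(* Defs.v *)
From Stdlib Require Import Reals.
From Coquelicot Require Import Coquelicot.
Open Scope R_scope.

Section Defs.
Context {E : CompleteNormedModule R_AbsRing}.

Definition separable : Prop :=
  exists d : nat -> E, forall (x : E) (eps : R), 0 < eps ->
    exists n, norm (minus (d n) x) < eps.

Definition is_linear (L : E -> E) : Prop :=
  (forall x y, L (plus x y) = plus (L x) (L y)) /\
  (forall (k : R) x, L (scal k x) = scal k (L x)).

Definition is_bounded_linear (L : E -> E) : Prop :=
  is_linear L /\ exists C : R, forall x, norm (L x) <= C * norm x.

Definition evolution_system (Rts : R -> R -> E -> E) : Prop :=
  (forall t s, 0 <= s <= t -> is_bounded_linear (Rts t s)) /\
  (forall t x, 0 <= t -> Rts t t x = x) /\
  (forall t s r x, 0 <= r <= s -> s <= t -> Rts t s (Rts s r x) = Rts t r x) /\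
  (forall x t s, 0 <= s <= t -> forall eps, 0 < eps -> exists delta, 0 < delta /\
     forall t' s', 0 <= s' <= t' -> Rabs (t' - t) < delta -> Rabs (s' - s) < delta ->
       norm (minus (Rts t' s' x) (Rts t s x)) < eps).

Definition C0_semigroup (S : R -> E -> E) : Prop :=
  (forall t, 0 <= t -> is_bounded_linear (S t)) /\
  (forall x, S 0 x = x) /\
  (forall t s x, 0 <= t -> 0 <= s -> S (t + s) x = S t (S s x)) /\
  (forall x eps, 0 < eps -> exists delta, 0 < delta /\
     forall t, 0 <= t < delta -> norm (minus (S t x) x) < eps).

Definition rel_compact (A : E -> Prop) : Prop :=
  forall x : nat -> E, (forall n, A (x n)) ->
    exists (phi : nat -> nat) (l : E),
      (forall n, (phi n < phi (S n))%nat) /\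
      forall eps, 0 < eps -> exists N, forall n, (N <= n)%nat ->
        norm (minus (x (phi n)) l) < eps.

Definition continuous_nonneg (u : R -> E) : Prop :=
  forall t, 0 <= t -> forall eps, 0 < eps -> exists delta, 0 < delta /\
    forall s, 0 <= s -> Rabs (s - t) < delta -> norm (minus (u s) (u t)) < eps.

(* mild solution on [0,+oo) of u' = A(t/lam) u + F(t/lam, u), u(0) = u0,
   where Rl = R^(lam) is the evolution system of u' = A(t/lam) u *)
Definition mild_solution (Rl : R -> R -> E -> E) (F : R -> E -> E) (lam : R)
  (u0 : E) (u : R -> E) : Prop :=
  continuous_nonneg u /\
  forall t, 0 <= t ->
    is_RInt (fun tau => Rl t tau (F (tau / lam) (u tau))) 0 t
            (minus (u t) (Rl t 0 u0)).

(* mild solution on [0,+oo) of the averaged problem u' = Ahat u + Fhat u, u(0) = u0,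
   where S is the C0 semigroup generated by Ahat *)
Definition mild_solution_avg (S : R -> E -> E) (Fh : E -> E) (u0 : E) (u : R -> E) : Prop :=
  continuous_nonneg u /\
  forall t, 0 <= t ->
    is_RInt (fun tau => S (t - tau) (Fh (u tau))) 0 t (minus (u t) (S t u0)).

End Defs.

(* Main.v *)
Require Import Defs.
From Stdlib Require Import Reals.
From Coquelicot Require Import Coquelicot.
From Stdlib Require Import Lra Classical ClassicalEpsilon List Lia.
Open Scope R_scope.

Section G. Context {G : AbelianGroup}.
Lemma g_mpl (y a b : G) : minus (plus y a) (plus y b) = minus a b.
Proof. unfold minus. rewrite (opp_plus (G:=G)), plus_assoc, (plus_comm y a), <- (plus_assoc a y), (plus_opp_r (G:=G)), plus_zero_r. reflexivity. Qed.
Lemma g_mpy (y a : G) : minus (plus y a) y = a.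
Proof. unfold minus. rewrite (plus_comm y a), <- plus_assoc, (plus_opp_r (G:=G)), plus_zero_r. reflexivity. Qed.
Lemma g_mmr (a b c : G) : minus (minus a c) (minus b c) = minus a b.
Proof. unfold minus. rewrite (opp_plus (G:=G)), (opp_opp (G:=G)), <- plus_assoc, (plus_assoc (opp c)), (plus_comm (opp c) (opp b)), <- plus_assoc, (plus_opp_l (G:=G)), plus_zero_r. reflexivity. Qed.
Lemma g_mpa (a b c : G) : minus (plus a b) c = plus (minus a c) b.
Proof. unfold minus. rewrite <- !plus_assoc, (plus_comm b). reflexivity. Qed.
Lemma g_mmp (a b c : G) : minus a (plus b c) = minus (minus a b) c.
Proof. unfold minus. rewrite (opp_plus (G:=G)), plus_assoc. reflexivity. Qed.
Lemma g_mpp (a b c d : G) : minus (plus a b) (plus c d) = plus (minus a c) (minus b d).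
Proof. unfold minus. rewrite (opp_plus (G:=G)), <- !plus_assoc. f_equal. rewrite plus_comm, <- plus_assoc. f_equal. apply plus_comm. Qed.
Lemma g_split3 (a b c e : G) : minus a b = plus (plus (minus a c) (minus c e)) (minus e b).
Proof. rewrite <- !minus_trans. reflexivity. Qed.
Lemma g_swap (x y z : G) : plus x (plus y z) = plus y (plus x z).
Proof. rewrite !plus_assoc, (plus_comm x y). reflexivity. Qed.
Lemma g_split2 (a b c d : G) : minus a b = plus (minus c d) (minus (minus a c) (minus b d)).
Proof.
unfold minus. rewrite (opp_plus (G:=G)), (opp_opp (G:=G)).
rewrite <- !plus_assoc.
rewrite (g_swap c (opp d)), (g_swap c a), (plus_assoc c (opp c)), (plus_opp_r (G:=G)), plus_zero_l.
rewrite (g_swap (opp d) a), (g_swap (opp d) (opp b)), (plus_opp_l (G:=G)), plus_zero_r. reflexivity.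
Qed.
End G.

Section A.
Context {E : CompleteNormedModule R_AbsRing}.
Notation G := (CompleteNormedModule.AbelianGroup R_AbsRing E).

Lemma plus_minus_c (x y : E) : plus y (minus x y) = x.
Proof. unfold minus. rewrite plus_comm, <- plus_assoc, (plus_opp_l (G:=G)), plus_zero_r. reflexivity. Qed.

Lemma cont_of_eps (f : R -> E) x :
  (forall eps, 0 < eps -> exists d, 0 < d /\ forall y, Rabs (y - x) < d ->
     norm (minus (f y) (f x)) < eps) -> continuous f x.
Proof.
intros H P [e HP]. destruct (H e (cond_pos e)) as [d [Hd Hy]].
exists (mkposreal d Hd). intros y Hy'. apply HP. apply (norm_compat1 (K:=R_AbsRing) (V:=E)). apply Hy. exact Hy'.
Qed.

Lemma nm_sym (x y : E) : norm (minus x y) = norm (minus y x).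
Proof. rewrite <- (norm_opp (K:=R_AbsRing) (V:=E)), (opp_minus (G:=G)). reflexivity. Qed.

Lemma nm_tri (x y z : E) : norm (minus x z) <= norm (minus x y) + norm (minus y z).
Proof. rewrite (minus_trans y). apply (norm_triangle (K:=R_AbsRing) (V:=E)). Qed.

Lemma nm_tri_r (x y : E) : norm x <= norm y + norm (minus x y).
Proof.
rewrite <- (plus_minus_c x y) at 1. apply (norm_triangle (K:=R_AbsRing) (V:=E)).
Qed.

Lemma nm_minus_le (x y : E) : norm (minus x y) <= norm x + norm y.
Proof. unfold minus. eapply Rle_trans. apply (norm_triangle (K:=R_AbsRing) (V:=E)). rewrite (norm_opp (K:=R_AbsRing) (V:=E)). lra. Qed.

Lemma minus_zero_r (x : E) : minus x zero = x.
Proof. unfold minus. rewrite opp_zero, plus_zero_r. reflexivity. Qed.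

Lemma norm_scal_R (k : R) (x : E) : norm (scal k x) <= Rabs k * norm x.
Proof. apply (norm_scal (K:=R_AbsRing) (V:=E)). Qed.

Lemma nm_eq (x y : E) : (forall eps, 0 < eps -> norm (minus x y) < eps) -> x = y.
Proof.
intros H. assert (norm (minus x y) = 0).
{ destruct (Rle_lt_or_eq_dec 0 _ (norm_ge_0 (minus x y))) as [h|h]; [|auto].
  specialize (H _ h). lra. }
apply norm_eq_zero in H0. rewrite <- (plus_minus_c x y), H0, plus_zero_r. reflexivity.
Qed.

Lemma lin_of_bl (L : E -> E) : is_bounded_linear L -> is_linear L.
Proof.
intros [[H1 H2] [C HC]]. apply Build_is_linear; auto.
exists (Rmax C 1). split. apply Rlt_le_trans with 1; [lra|apply Rmax_r].
intros x. eapply Rle_trans. apply HC. apply Rmult_le_compat_r. apply norm_ge_0. apply Rmax_l.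
Qed.

Lemma Riemann_sum_lin (L : E -> E) (f : R -> E) ptd : is_linear L ->
  L (Riemann_sum f ptd) = Riemann_sum (fun x => L (f x)) ptd.
Proof.
intros HL. unfold Riemann_sum. destruct ptd as [h t]. simpl.
match goal with |- context [seq.pairmap _ ?p _] => generalize p end. induction t as [|a t IH]; intros p; simpl.
- apply (linear_zero (K:=R_AbsRing) (U:=E) (V:=E)); auto.
- rewrite (linear_plus (K:=R_AbsRing) (U:=E) (V:=E)), (linear_scal (K:=R_AbsRing) (U:=E) (V:=E)), IH; auto.
Qed.

Lemma is_RInt_lin (L : E -> E) (f : R -> E) a b l : is_linear L ->
  is_RInt f a b l -> is_RInt (fun x => L (f x)) a b (L l).
Proof.
intros HL H. unfold is_RInt in *.
eapply filterlim_ext.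
2: { eapply filterlim_comp. exact H. apply linear_cont. exact HL. }
intros ptd. simpl. rewrite (linear_scal (K:=R_AbsRing) (U:=E) (V:=E)), Riemann_sum_lin; auto.
Qed.

Lemma e_mpl (y a b : E) : minus (plus y a) (plus y b) = minus a b.
Proof. exact (g_mpl (G:=G) y a b). Qed.
Lemma e_mpy (y a : E) : minus (plus y a) y = a.
Proof. exact (g_mpy (G:=G) y a). Qed.
Lemma e_mmr (a b c : E) : minus (minus a c) (minus b c) = minus a b.
Proof. exact (g_mmr (G:=G) a b c). Qed.

Lemma e_mpa (a b c : E) : minus (plus a b) c = plus (minus a c) b.
Proof. exact (g_mpa (G:=G) a b c). Qed.
Lemma e_mmp (a b c : E) : minus a (plus b c) = minus (minus a b) c.
Proof. exact (g_mmp (G:=G) a b c). Qed.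
Lemma nm_plus (a b : E) : norm (plus a b) <= norm a + norm b.
Proof. apply (norm_triangle (K:=R_AbsRing) (V:=E)). Qed.

Lemma e_mpp (a b c d : E) : minus (plus a b) (plus c d) = plus (minus a c) (minus b d).
Proof. exact (g_mpp (G:=G) a b c d). Qed.
Lemma le_of_lt_eps (a b : R) : (forall eta, 0 < eta -> a < b + eta) -> a <= b.
Proof. intros H. apply Rnot_lt_le. intro h. specialize (H ((a - b)/2) ltac:(lra)). lra. Qed.

Lemma nm_self (x : E) : norm (minus x x) = 0.
Proof. rewrite (minus_eq_zero (G:=G)). apply (norm_zero (K:=R_AbsRing) (V:=E)). Qed.

Lemma e_split3 (a b c e : E) : minus a b = plus (plus (minus a c) (minus c e)) (minus e b).
Proof. exact (g_split3 (G:=G) a b c e). Qed.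
Lemma nm_scal_minus (k : R) (a b : E) : norm (minus (scal k a) (scal k b)) <= Rabs k * norm (minus a b).
Proof. rewrite <- (scal_minus_distr_l (K:=R_Ring) (V:=E)). apply norm_scal_R. Qed.

Lemma e_split2 (a b c d : E) : minus a b = plus (minus c d) (minus (minus a c) (minus b d)).
Proof. exact (g_split2 (G:=G) a b c d). Qed.

End A.


Lemma lebesgue2 (a b : R) (Q : R -> R -> R -> Prop) :
  (forall t, a <= t <= b -> exists d, 0 < d /\ forall s r, a <= s <= b -> Rabs (s - t) < d -> Rabs r < d -> Q t s r) ->
  exists d, 0 < d /\ forall s, a <= s <= b -> exists t0, a <= t0 <= b /\
     forall s' r, a <= s' <= b -> Rabs (s' - s) < d -> Rabs r < d -> Q t0 s' r.
Proof.
intros H.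
assert (Hd : forall t, {d : posreal | a <= t <= b -> forall s r, a <= s <= b -> Rabs (s - t) < d -> Rabs r < d -> Q t s r}).
{ intros t. apply constructive_indefinite_description.
  destruct (classic (a <= t <= b)) as [Ht|Ht].
  - destruct (H t Ht) as [d [Hd Hq]]. exists (mkposreal d Hd). intros _. exact Hq.
  - exists (mkposreal 1 Rlt_0_1). intros; contradiction. }
set (delta := fun t => proj1_sig (Hd t)).
set (delta2 := fun t => mkposreal (delta t / 2) (ltac:(unfold delta; destruct (Hd t) as [[x hx] ?]; simpl; lra))).
destruct (compactness_value_1d a b delta2) as [d Hc].
exists d. split. apply cond_pos. intros s Hs.
apply NNPP. intro Hn. apply (Hc s Hs). intros [t0 [Ht0 [H1 H2]]]. apply Hn.
exists t0. split. exact Ht0. intros s' r Hs' Hss Hr.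
unfold delta2 in H1, H2; simpl in H1, H2.
pose proof (Rabs_pos (s - t0)).
apply (proj2_sig (Hd t0) Ht0 s' r Hs'); fold (delta t0).
- replace (s' - t0) with ((s' - s) + (s - t0)) by ring.
  eapply Rle_lt_trans. apply Rabs_triang. lra.
- lra.
Qed.

Lemma lebesgue (a b : R) (Q : R -> R -> Prop) :
  (forall t, a <= t <= b -> exists d, 0 < d /\ forall s, a <= s <= b -> Rabs (s - t) < d -> Q t s) ->
  exists d, 0 < d /\ forall s, a <= s <= b -> exists t0, a <= t0 <= b /\
     forall s', a <= s' <= b -> Rabs (s' - s) < d -> Q t0 s'.
Proof.
intros H. destruct (lebesgue2 a b (fun t s _ => Q t s)) as [d [Hd Hl]].
{ intros t Ht. destruct (H t Ht) as [d [Hd Hq]]. exists d. split; auto. }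
exists d. split; auto. intros s Hs. destruct (Hl s Hs) as [t0 [Ht0 Hq]].
exists t0. split; auto. intros s' Hs' Hss. apply (Hq s' 0); auto. rewrite Rabs_R0; auto.
Qed.

Lemma grid (a b d : R) : a <= b -> 0 < d -> exists N : nat, forall s, a <= s <= b ->
  exists k, (k <= N)%nat /\ a + INR k * d <= s /\ s < a + INR k * d + d.
Proof.
intros Hab Hd. assert (H0 : 0 <= (b - a) / d) by (apply Rdiv_le_0_compat; lra).
destruct (nfloor_ex _ H0) as [N HN]. exists N. intros s Hs.
assert (H1 : 0 <= (s - a) / d) by (apply Rdiv_le_0_compat; lra).
destruct (nfloor_ex _ H1) as [k Hk]. exists k.
assert ((s - a) / d <= (b - a) / d) by (apply Rmult_le_compat_r; [left; apply Rinv_0_lt_compat; lra| lra]).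
split.
- assert (INR k < INR N + 1) by lra. rewrite <- S_INR in H2. apply INR_lt in H2. lia.
- destruct Hk as [Hk1 Hk2].
  apply Rmult_le_compat_r with (r := d) in Hk1; [|lra].
  apply Rmult_lt_compat_r with (r := d) in Hk2; [|lra].
  unfold Rdiv in *. rewrite Rmult_assoc, Rinv_l in Hk1, Hk2 by lra. lra.
Qed.

Lemma finite_bound (g : nat -> R) (N : nat) : exists B, forall k, (k <= N)%nat -> g k <= B.
Proof.
induction N as [|N [B HB]].
- exists (g 0%nat). intros k Hk. replace k with 0%nat by lia. lra.
- exists (Rmax B (g (S N))). intros k Hk. destruct (Nat.eq_dec k (S N)) as [->|h].
  + apply Rmax_r. + eapply Rle_trans. apply HB. lia. apply Rmax_l.
Qed.

Section B.
Context {E : CompleteNormedModule R_AbsRing}.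

Definition contOn (f : R -> E) a b := forall t, a <= t <= b -> forall eps, 0 < eps ->
  exists d, 0 < d /\ forall s, a <= s <= b -> Rabs (s - t) < d -> norm (minus (f s) (f t)) < eps.

Lemma unif_cont (f : R -> E) a b : contOn f a b -> forall eps, 0 < eps ->
  exists d, 0 < d /\ forall s t, a <= s <= b -> a <= t <= b -> Rabs (s - t) < d ->
    norm (minus (f s) (f t)) < eps.
Proof.
intros H eps He.
destruct (lebesgue a b (fun t s => norm (minus (f s) (f t)) < eps / 2)) as [d [Hd Hl]].
{ intros t Ht. apply (H t Ht). lra. }
exists d. split; auto. intros s t Hs Ht Hst.
destruct (Hl s Hs) as [t0 [Ht0 Hq]].
eapply Rle_lt_trans. apply (nm_tri _ (f t0)).
rewrite (nm_sym (f t0)).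
assert (norm (minus (f s) (f t0)) < eps/2) by (apply Hq; auto; rewrite Rminus_eq_0, Rabs_R0; auto).
assert (norm (minus (f t) (f t0)) < eps/2) by (apply Hq; auto; rewrite Rabs_minus_sym; auto).
lra.
Qed.

Lemma contOn_bounded (f : R -> E) a b : a <= b -> contOn f a b ->
  exists B, forall s, a <= s <= b -> norm (f s) <= B.
Proof.
intros Hab H. destruct (unif_cont f a b H 1 Rlt_0_1) as [d [Hd Hu]].
destruct (grid a b d Hab Hd) as [N HN].
destruct (finite_bound (fun k => norm (f (a + INR k * d))) N) as [B HB].
exists (B + 1). intros s Hs. destruct (HN s Hs) as [k [Hk [H1 H2]]].
assert (Hg : a <= a + INR k * d <= b). { split. pose proof (pos_INR k). nra. lra. }
eapply Rle_trans. apply (nm_tri_r _ (f (a + INR k * d))).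
assert (norm (minus (f s) (f (a + INR k * d))) < 1). { apply Hu; auto. rewrite Rabs_right; lra. }
specialize (HB k Hk). simpl in HB. lra.
Qed.

Definition TB (K : E -> Prop) := forall eps, 0 < eps -> exists l : list E,
  forall y, K y -> exists z, In z l /\ norm (minus y z) < eps.

Lemma TB_image (f : R -> E) a b : a <= b -> contOn f a b -> TB (fun y => exists s, a <= s <= b /\ y = f s).
Proof.
intros Hab H eps He. destruct (unif_cont f a b H eps He) as [d [Hd Hu]].
destruct (grid a b d Hab Hd) as [N HN].
exists (map (fun k => f (a + INR k * d)) (seq 0 (S N))).
intros y [s [Hs ->]]. destruct (HN s Hs) as [k [Hk [H1 H2]]].
exists (f (a + INR k * d)). split.
- apply (in_map (fun k => f (a + INR k * d))). apply in_seq. lia.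
- apply Hu; auto. split. pose proof (pos_INR k). nra. lra. rewrite Rabs_right; lra.
Qed.

Lemma TB_approx (K : E -> Prop) : (forall eps, 0 < eps -> exists K', TB K' /\
   forall y, K y -> exists z, K' z /\ norm (minus y z) < eps) -> TB K.
Proof.
intros H eps He. destruct (H (eps/2) ltac:(lra)) as [K' [HK' Hy]].
destruct (HK' (eps/2) ltac:(lra)) as [l Hl]. exists l. intros y Ky.
destruct (Hy y Ky) as [z [Kz Hz]]. destruct (Hl z Kz) as [w [Hw Hzw]].
exists w. split; auto. eapply Rle_lt_trans. apply (nm_tri _ z). lra.
Qed.

Lemma TB_union {I : Type} (l : list I) (K : I -> E -> Prop) : (forall i, In i l -> TB (K i)) ->
  TB (fun y => exists i, In i l /\ K i y).
Proof.
induction l as [|i l IH]; intros H eps He.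
- exists nil. intros y [i [[] _]].
- destruct (H i (or_introl eq_refl) eps He) as [l1 H1].
  destruct (IH (fun j hj => H j (or_intror hj)) eps He) as [l2 H2].
  exists (l1 ++ l2). intros y [j [[<-|hj] Ky]].
  + destruct (H1 y Ky) as [z [? ?]]. exists z. split; auto. apply in_or_app; auto.
  + destruct (H2 y (ex_intro _ j (conj hj Ky))) as [z [? ?]]. exists z. split; auto. apply in_or_app; auto.
Qed.

Lemma TB_union2 (K1 K2 : E -> Prop) : TB K1 -> TB K2 -> TB (fun y => K1 y \/ K2 y).
Proof.
intros H1 H2 eps He. destruct (H1 eps He) as [l1 L1]. destruct (H2 eps He) as [l2 L2].
exists (l1 ++ l2). intros y [Ky|Ky].
- destruct (L1 y Ky) as [z [? ?]]. exists z. split; auto. apply in_or_app; auto.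
- destruct (L2 y Ky) as [z [? ?]]. exists z. split; auto. apply in_or_app; auto.
Qed.

Fixpoint build (nx : list E -> E) (n : nat) : list E :=
  match n with O => nil | S n => nx (build nx n) :: build nx n end.

Lemma build_in nx i j : (i < j)%nat -> In (nx (build nx i)) (build nx j).
Proof.
induction j; intros H. lia. simpl. destruct (Nat.eq_dec i j) as [->|h]. left; auto. right. apply IHj. lia.
Qed.

Lemma TB_of_rel_compact (A : E -> Prop) : rel_compact A -> TB A.
Proof.
intros H eps He. apply NNPP. intro Hn.
assert (Hx : forall l : list E, exists y, A y /\ forall z, In z l -> eps <= norm (minus y z)).
{ intros l. apply NNPP. intro Hl. apply Hn. exists l. intros y Ay.
  apply NNPP. intro Hy. apply Hl. exists y. split; auto. intros z Hz.
  apply Rnot_lt_le. intro. apply Hy. exists z; auto. }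
set (nx := fun l => proj1_sig (constructive_indefinite_description _ (Hx l))).
assert (Hnx : forall l, A (nx l) /\ forall z, In z l -> eps <= norm (minus (nx l) z)).
{ intros l. unfold nx. destruct (constructive_indefinite_description _ (Hx l)). auto. }
set (x := fun n => nx (build nx n)).
destruct (H x (fun n => proj1 (Hnx _))) as [phi [l [Hphi Hc]]].
destruct (Hc (eps / 2) ltac:(lra)) as [N HN].
assert (Hsep : norm (minus (x (phi (S N))) (x (phi N))) >= eps).
{ apply Rle_ge. unfold x at 1. apply (proj2 (Hnx _)). apply build_in. apply Hphi. }
assert (H1 := HN N (le_n _)). assert (H2 := HN (S N) ltac:(lia)).
assert (norm (minus (x (phi (S N))) (x (phi N))) < eps).
{ eapply Rle_lt_trans. apply (nm_tri _ l). rewrite (nm_sym l). lra. }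
lra.
Qed.

End B.


Lemma RInt_exp (K B t : R) : B <> 0 ->
  is_RInt (fun s => K * exp (B * s)) 0 t (K / B * (exp (B * t) - 1)).
Proof.
intros HB.
assert (H := is_RInt_derive (fun s => K / B * exp (B * s)) (fun s => K * exp (B * s)) 0 t).
replace (K / B * (exp (B * t) - 1)) with (minus (K / B * exp (B * t)) (K / B * exp (B * 0))).
apply H.
- intros x _. auto_derive; auto. field; auto.
- intros x _. apply (ex_derive_continuous (fun s => K * exp (B * s))). auto_derive; auto.
- rewrite Rmult_0_r, exp_0. unfold minus, plus, opp; simpl. ring.
Qed.

Lemma RInt_cst_exp (al be b t : R) : b <> 0 ->
  is_RInt (fun s => al + be * exp (b * s)) 0 t (al * t + be / b * (exp (b * t) - 1)).
Proof.
intros Hb.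
assert (H := is_RInt_plus (fun _ => al) (fun s => be * exp (b * s)) 0 t _ _ (is_RInt_const 0 t al) (RInt_exp be b t Hb)).
replace (al * t + be / b * (exp (b * t) - 1)) with (plus (scal (t - 0) al) (be / b * (exp (b * t) - 1))).
exact H. unfold plus, scal; simpl. unfold mult; simpl. ring.
Qed.

Section C.
Context {E : CompleteNormedModule R_AbsRing}.

Lemma norm_int_le (f : R -> E) (t : R) (l : E) (al be b : R) : 0 <= t -> 0 < b ->
  is_RInt f 0 t l -> (forall s, 0 <= s <= t -> norm (f s) <= al + be * exp (b * s)) ->
  norm l <= al * t + be / b * (exp (b * t) - 1).
Proof.
intros Ht Hb Hf Hle.
apply (norm_RInt_le f (fun s => al + be * exp (b * s)) 0 t l); auto.
apply RInt_cst_exp. lra.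
Qed.

End C.

Lemma exp_le (x y : R) : x <= y -> exp x <= exp y.
Proof. intros [h|h]. left. apply exp_increasing; auto. rewrite h; lra. Qed.

Lemma gronwall (T a b : R) (phi : R -> R) : 0 < b -> 0 <= a ->
  (forall s, 0 <= s <= T -> 0 <= phi s) -> (exists B, forall s, 0 <= s <= T -> phi s <= B) ->
  (forall m, 0 <= m -> (forall s, 0 <= s <= T -> phi s <= m * exp (2 * b * s)) ->
     forall t, 0 <= t <= T -> phi t <= a + m / 2 * exp (2 * b * t)) ->
  forall t, 0 <= t <= T -> phi t <= 2 * a * exp (2 * b * t).
Proof.
intros Hb Ha Hpos [B HB] Hg t Ht.
set (S := fun y => exists s, 0 <= s <= T /\ y = phi s * exp (- (2 * b * s))).
assert (Hexp : forall s, 0 <= s -> 0 < exp (- (2 * b * s)) <= 1).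
{ intros s Hs. split. apply exp_pos. rewrite <- exp_0. apply exp_le. nra. }
assert (Hinv : forall s, exp (2 * b * s) * exp (- (2 * b * s)) = 1).
{ intros s. rewrite <- exp_plus. replace (2 * b * s + - (2 * b * s)) with 0 by ring. apply exp_0. }
destruct (completeness S) as [m0 [Hub Hlub]].
{ exists (Rabs B). intros y [s [Hs ->]]. specialize (Hexp s (proj1 Hs)). specialize (HB s Hs).
  specialize (Hpos s Hs). assert (B <= Rabs B) by apply Rle_abs. nra. }
{ exists (phi 0 * exp (- (2 * b * 0))). exists 0. split; auto; lra. }
assert (Hm0 : 0 <= m0).
{ eapply Rle_trans. 2: apply Hub. 2: exists 0; split; [lra|reflexivity].
  assert (0 <= phi 0) by (apply Hpos; lra). specialize (Hexp 0 (Rle_refl _)). nra. }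
assert (Hle : forall s, 0 <= s <= T -> phi s <= m0 * exp (2 * b * s)).
{ intros s Hs. assert (h := Hub _ (ex_intro _ s (conj Hs eq_refl))).
  assert (h2 := Hinv s). assert (0 < exp (2 * b * s)) by apply exp_pos.
  apply Rmult_le_compat_r with (r := exp (2 * b * s)) in h; [|lra].
  rewrite Rmult_assoc, (Rmult_comm (exp _)), h2, Rmult_1_r in h. exact h. }
assert (Hg' := Hg m0 Hm0 Hle).
assert (m0 <= a + m0 / 2).
{ apply Hlub. intros y [s [Hs ->]]. specialize (Hg' s Hs). specialize (Hexp s (proj1 Hs)).
  assert (h2 := Hinv s).
  apply Rmult_le_compat_r with (r := exp (- (2 * b * s))) in Hg'; [|lra].
  replace ((a + m0 / 2 * exp (2 * b * s)) * exp (- (2 * b * s))) with (a * exp (- (2 * b * s)) + m0 / 2) in Hg' by (rewrite Rmult_plus_distr_r, (Rmult_assoc (m0 / 2)), h2; ring). nra. }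
eapply Rle_trans. apply Hle; auto. apply Rmult_le_compat_r. left; apply exp_pos. lra.
Qed.


Section D.
Context {E : CompleteNormedModule R_AbsRing}.
Context (U : R -> R -> E -> E) (Gf : R -> E -> E).
Hypothesis HUlin : forall t s, 0 <= s <= t -> is_linear (U t s).
Hypothesis HUbd : forall T, exists MT, 0 < MT /\ forall t s x, 0 <= s <= t -> t <= T ->
  norm (U t s x) <= MT * norm x.
Hypothesis HUc : forall x t s, 0 <= s <= t -> forall eps, 0 < eps -> exists d, 0 < d /\
  forall t' s', 0 <= s' <= t' -> Rabs (t' - t) < d -> Rabs (s' - s) < d ->
    norm (minus (U t' s' x) (U t s x)) < eps.
Hypothesis HGc : forall t x, 0 <= t -> forall eps, 0 < eps -> exists d, 0 < d /\
  forall t' y, 0 <= t' -> Rabs (t' - t) < d -> norm (minus y x) < d ->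
    norm (minus (Gf t' y) (Gf t x)) < eps.

Lemma cn_contOn (u : R -> E) T : continuous_nonneg u -> contOn u 0 T.
Proof.
intros H t Ht eps He. destruct (H t (proj1 Ht) eps He) as [d [Hd Hs]].
exists d. split; auto. intros s Hs' Hst. apply Hs; auto. lra.
Qed.

Lemma G_comp_cont (v : R -> E) : continuous_nonneg v -> continuous_nonneg (fun t => Gf t (v t)).
Proof.
intros Hv t Ht eps He. destruct (HGc t (v t) Ht eps He) as [d [Hd Hg]].
destruct (Hv t Ht d Hd) as [d2 [Hd2 Hv2]].
exists (Rmin d d2). split. apply Rmin_pos; auto. intros s Hs Hst.
apply Hg; auto. eapply Rlt_le_trans. apply Hst. apply Rmin_l.
apply Hv2; auto. eapply Rlt_le_trans. apply Hst. apply Rmin_r.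
Qed.

Lemma U_lin_minus t s x y : 0 <= s <= t -> U t s (minus x y) = minus (U t s x) (U t s y).
Proof. intros H. apply (linear_minus (K:=R_AbsRing) (U:=E) (V:=E)). auto. Qed.

Lemma U_joint (g : R -> E) t tau0 : continuous_nonneg g -> 0 <= tau0 <= t ->
  forall eps, 0 < eps -> exists d, 0 < d /\ forall t' tau, 0 <= tau <= t' ->
    Rabs (t' - t) < d -> Rabs (tau - tau0) < d ->
    norm (minus (U t' tau (g tau)) (U t tau0 (g tau0))) < eps.
Proof.
intros Hg Ht eps He.
destruct (HUbd (t + 1)) as [M1 [HM1 HM]].
destruct (Hg tau0 (proj1 Ht) (eps / 2 / M1)) as [d1 [Hd1 Hg1]].
{ apply Rdiv_lt_0_compat; lra. }
destruct (HUc (g tau0) t tau0 Ht (eps / 2)) as [d2 [Hd2 Hu2]]. lra.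
exists (Rmin 1 (Rmin d1 d2)). split. repeat apply Rmin_pos; lra.
intros t' tau Htt Ht' Htau.
assert (h1 : Rmin 1 (Rmin d1 d2) <= 1) by apply Rmin_l.
assert (h2 : Rmin 1 (Rmin d1 d2) <= d1) by (eapply Rle_trans; [apply Rmin_r| apply Rmin_l]).
assert (h3 : Rmin 1 (Rmin d1 d2) <= d2) by (eapply Rle_trans; [apply Rmin_r| apply Rmin_r]).
eapply Rle_lt_trans. apply (nm_tri _ (U t' tau (g tau0))).
rewrite <- U_lin_minus by lra.
assert (norm (U t' tau (minus (g tau) (g tau0))) <= M1 * norm (minus (g tau) (g tau0))).
{ apply HM. lra. apply Rabs_def2 in Ht'. lra. }
assert (norm (minus (g tau) (g tau0)) < eps / 2 / M1) by (apply Hg1; lra).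
assert (M1 * norm (minus (g tau) (g tau0)) < eps / 2).
{ apply Rmult_lt_compat_l with (r := M1) in H0; auto. replace (M1 * (eps / 2 / M1)) with (eps / 2) in H0 by (field; lra). auto. }
assert (norm (minus (U t' tau (g tau0)) (U t tau0 (g tau0))) < eps / 2) by (apply Hu2; lra).
lra.
Qed.

Definition clamp (t x : R) := Rmin t (Rmax 0 x).

Lemma clamp_in t x : 0 <= t -> 0 <= clamp t x <= t.
Proof. intros; unfold clamp, Rmin, Rmax; repeat destruct Rle_dec; lra. Qed.

Lemma clamp_lip t x y : 0 <= t -> Rabs (clamp t x - clamp t y) <= Rabs (x - y).
Proof. intros; unfold clamp, Rmin, Rmax; repeat destruct Rle_dec; unfold Rabs; repeat destruct Rcase_abs; lra. Qed.

Lemma clamp_id t x : 0 <= x <= t -> clamp t x = x.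
Proof. intros; unfold clamp, Rmin, Rmax; repeat destruct Rle_dec; lra. Qed.

Lemma U_int (g : R -> E) t : continuous_nonneg g -> 0 <= t ->
  is_RInt (fun tau => U t tau (g tau)) 0 t (RInt (fun tau => U t tau (g tau)) 0 t).
Proof.
intros Hg Ht. apply RInt_correct.
set (h := fun tau => U t (clamp t tau) (g (clamp t tau))).
assert (Hh : ex_RInt h 0 t).
{ apply ex_RInt_continuous. intros z _. apply cont_of_eps. intros eps He.
  destruct (U_joint g t (clamp t z) Hg (clamp_in t z Ht) eps He) as [d [Hd Hu]].
  exists d. split; auto. intros y Hy. unfold h. apply Hu. apply clamp_in; auto.
  rewrite Rminus_eq_0, Rabs_R0; auto.
  eapply Rle_lt_trans. apply clamp_lip; auto. auto. }
destruct Hh as [l Hl]. exists l. eapply is_RInt_ext. 2: exact Hl.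
intros x Hx. rewrite Rmin_left, Rmax_right in Hx by lra. unfold h. rewrite clamp_id by lra. reflexivity.
Qed.

Lemma is_RInt_val (f : R -> E) a b l l' : is_RInt f a b l -> l = l' -> is_RInt f a b l'.
Proof. intros H <-; auto. Qed.

Lemma norm_int_cst (f : R -> E) a b l K : a <= b -> is_RInt f a b l ->
  (forall s, a <= s <= b -> norm (f s) <= K) -> norm l <= (b - a) * K.
Proof.
intros Hab Hf Hle. apply (norm_RInt_le f (fun _ => K) a b l); auto.
apply (is_RInt_const a b K).
Qed.

Lemma int_split (f : R -> E) a b c : a <= b <= c -> ex_RInt f a c ->
  exists l1 l2, is_RInt f a b l1 /\ is_RInt f b c l2 /\ RInt f a c = plus l1 l2.
Proof.
intros Habc Hf.
assert (H1 := RInt_correct f a b (ex_RInt_Chasles_1 f a b c Habc Hf)).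
assert (H2 := RInt_correct f b c (ex_RInt_Chasles_2 f a b c Habc Hf)).
exists (RInt f a b), (RInt f b c). split; auto. split; auto.
apply is_RInt_unique. eapply is_RInt_Chasles; eauto.
Qed.

Lemma Phi_cont (g : R -> E) : continuous_nonneg g ->
  continuous_nonneg (fun t => RInt (fun tau => U t tau (g tau)) 0 t).
Proof.
intros Hg t0 Ht0 eps He.
destruct (HUbd (t0 + 1)) as [M1 [HM1 HM]].
destruct (contOn_bounded g 0 (t0 + 1) ltac:(lra) (cn_contOn g _ Hg)) as [B0 HB0].
set (B := Rabs B0 + 1).
assert (HB : forall s, 0 <= s <= t0 + 1 -> norm (g s) <= B).
{ intros s Hs. specialize (HB0 s Hs). unfold B. pose proof (Rle_abs B0). lra. }
assert (HBp : 0 < B) by (unfold B; pose proof (Rabs_pos B0); lra).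
set (e1 := eps / (4 * (t0 + 1))).
assert (He1 : 0 < e1) by (unfold e1; apply Rdiv_lt_0_compat; lra).
destruct (lebesgue2 0 t0 (fun tau0 tau r => 0 <= tau <= t0 + r ->
    norm (minus (U (t0 + r) tau (g tau)) (U t0 tau0 (g tau0))) < e1)) as [d [Hd Hl]].
{ intros tau0 Htau0. destruct (U_joint g t0 tau0 Hg Htau0 e1 He1) as [d [Hd Hu]].
  exists d. split; auto. intros s r Hs Hsr Hr Hs2. apply Hu; auto.
  replace (t0 + r - t0) with r by ring. auto. }
set (e2 := eps / (2 * (M1 * B + 1))).
assert (He2 : 0 < e2) by (unfold e2; apply Rdiv_lt_0_compat; [lra| pose proof (Rmult_lt_0_compat M1 B HM1 HBp); lra]).
exists (Rmin d (Rmin 1 e2)). split. repeat apply Rmin_pos; lra.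
intros t' Ht' Htt.
assert (hd : Rabs (t' - t0) < d) by (eapply Rlt_le_trans; [apply Htt| apply Rmin_l]).
assert (h1 : Rabs (t' - t0) < 1) by (eapply Rlt_le_trans; [apply Htt| eapply Rle_trans; [apply Rmin_r| apply Rmin_l]]).
assert (h2 : Rabs (t' - t0) < e2) by (eapply Rlt_le_trans; [apply Htt| eapply Rle_trans; [apply Rmin_r| apply Rmin_r]]).
assert (Hpt : forall tau, 0 <= tau <= Rmin t0 t' ->
   norm (minus (U t' tau (g tau)) (U t0 tau (g tau))) <= 2 * e1).
{ intros tau Htau. assert (tau <= t0) by (eapply Rle_trans; [apply Htau| apply Rmin_l]).
  assert (tau <= t') by (eapply Rle_trans; [apply Htau| apply Rmin_r]).
  destruct (Hl tau ltac:(lra)) as [tau0 [Htau0 Hq]].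
  assert (q1 := Hq tau (t' - t0) ltac:(lra) ltac:(rewrite Rminus_eq_0, Rabs_R0; lra) hd ltac:(lra)).
  assert (q2 := Hq tau 0 ltac:(lra) ltac:(rewrite Rminus_eq_0, Rabs_R0; lra) ltac:(rewrite Rabs_R0; lra) ltac:(lra)).
  replace (t0 + (t' - t0)) with t' in q1 by ring. rewrite Rplus_0_r in q2.
  eapply Rle_trans. apply (nm_tri _ (U t0 tau0 (g tau0))). rewrite (nm_sym (U t0 tau0 (g tau0))). lra. }
assert (Hbd : forall t tau, 0 <= tau <= t -> t <= t0 + 1 -> norm (U t tau (g tau)) <= M1 * B).
{ intros t tau Htau Ht. eapply Rle_trans. apply HM; lra. apply Rmult_le_compat_l. lra. apply HB. lra. }
assert (e2b : (M1 * B) * e2 <= eps / 2).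
{ assert (0 < M1 * B) by (apply Rmult_lt_0_compat; lra).
  apply Rle_trans with ((M1 * B + 1) * e2).
  apply Rmult_le_compat_r; lra. right. unfold e2. field. lra. }
assert (e1b : t0 * (2 * e1) <= eps / 2 - eps / (2 * (t0 + 1))).
{ unfold e1. apply Rle_trans with (eps / 2 * (t0 / (t0 + 1))). right; field; lra.
  replace (eps / 2 - eps / (2 * (t0 + 1))) with (eps / 2 * (t0 / (t0 + 1))) by (field; lra). lra. }
assert (eps / (2 * (t0 + 1)) > 0) by (apply Rdiv_lt_0_compat; lra).
destruct (Rle_lt_dec t0 t') as [Hle|Hlt].
- rewrite Rabs_right in h2, h1 by lra.
  destruct (int_split (fun tau => U t' tau (g tau)) 0 t0 t' ltac:(lra)) as [l1 [l2 [Hl1 [Hl2 Heq]]]].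
  { eexists. apply U_int; auto. }
  rewrite Heq, (e_mpa l1 l2).
  assert (Hi := is_RInt_minus _ _ _ _ _ _ Hl1 (U_int g t0 Hg Ht0)).
  eapply Rle_lt_trans. apply nm_plus.
  assert (norm (minus l1 (RInt (fun tau => U t0 tau (g tau)) 0 t0)) <= (t0 - 0) * (2 * e1)).
  { eapply norm_int_cst. lra. exact Hi. intros s Hs. apply Hpt. rewrite Rmin_left; lra. }
  assert (norm l2 <= (t' - t0) * (M1 * B)).
  { eapply norm_int_cst. lra. exact Hl2. intros s Hs. apply Hbd; lra. }
  assert ((t' - t0) * (M1 * B) <= e2 * (M1 * B)). { apply Rmult_le_compat_r. left; apply Rmult_lt_0_compat; lra. lra. }
  eapply Rle_lt_trans. apply Rplus_le_compat. apply H0. apply H1. lra.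
- rewrite Rabs_left in h2, h1 by lra.
  destruct (int_split (fun tau => U t0 tau (g tau)) 0 t' t0 ltac:(lra)) as [l1 [l2 [Hl1 [Hl2 Heq]]]].
  { eexists. apply U_int; auto. }
  rewrite Heq, (e_mmp _ l1 l2).
  assert (Hi := is_RInt_minus _ _ _ _ _ _ (U_int g t' Hg Ht') Hl1).
  eapply Rle_lt_trans. apply nm_minus_le.
  assert (norm (minus (RInt (fun tau => U t' tau (g tau)) 0 t') l1) <= (t' - 0) * (2 * e1)).
  { eapply norm_int_cst. lra. exact Hi. intros s Hs. apply Hpt. rewrite Rmin_right; lra. }
  assert (norm l2 <= (t0 - t') * (M1 * B)).
  { eapply norm_int_cst. lra. exact Hl2. intros s Hs. apply Hbd; lra. }
  assert ((t0 - t') * (M1 * B) <= e2 * (M1 * B)). { apply Rmult_le_compat_r. left; apply Rmult_lt_0_compat; lra. lra. }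
  assert (t' * (2 * e1) <= t0 * (2 * e1)) by (apply Rmult_le_compat_r; lra).
  eapply Rle_lt_trans. apply Rplus_le_compat. apply H0. apply H1. lra.
Qed.

Hypothesis HGl : forall r, 0 < r -> exists L, forall t (x y : E), 0 <= t -> norm x <= r -> norm y <= r ->
  norm (minus (Gf t x) (Gf t y)) <= L * norm (minus x y).
Hypothesis HGg : exists c, 0 < c /\ forall t (v : E), 0 <= t -> norm (Gf t v) <= c * (1 + norm v).

Lemma HGl' r : 0 < r -> exists L, 0 < L /\ forall t (x y : E), 0 <= t -> norm x <= r -> norm y <= r ->
  norm (minus (Gf t x) (Gf t y)) <= L * norm (minus x y).
Proof.
intros Hr. destruct (HGl r Hr) as [L HL]. exists (Rabs L + 1). split. pose proof (Rabs_pos L); lra.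
intros t x y Ht Hx Hy. eapply Rle_trans. apply HL; auto. apply Rmult_le_compat_r. apply norm_ge_0.
pose proof (Rle_abs L); lra.
Qed.

Lemma U0_cont x : continuous_nonneg (fun t => U t 0 x).
Proof.
intros t Ht eps He. destruct (HUc x t 0 ltac:(lra) eps He) as [d [Hd Hu]].
exists d. split; auto. intros s Hs Hst. apply Hu; auto. lra. rewrite Rminus_eq_0, Rabs_R0; auto.
Qed.

Lemma plus_cont (f g : R -> E) : continuous_nonneg f -> continuous_nonneg g ->
  continuous_nonneg (fun t => plus (f t) (g t)).
Proof.
intros Hf Hg t Ht eps He. destruct (Hf t Ht (eps/2) ltac:(lra)) as [d1 [Hd1 H1]].
destruct (Hg t Ht (eps/2) ltac:(lra)) as [d2 [Hd2 H2]].
exists (Rmin d1 d2). split. apply Rmin_pos; auto. intros s Hs Hst.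
rewrite e_mpp. eapply Rle_lt_trans. apply nm_plus.
assert (norm (minus (f s) (f t)) < eps / 2). apply H1; auto. eapply Rlt_le_trans. apply Hst. apply Rmin_l.
assert (norm (minus (g s) (g t)) < eps / 2). apply H2; auto. eapply Rlt_le_trans. apply Hst. apply Rmin_r.
lra.
Qed.

Fixpoint pic (x : E) (k : nat) : R -> E :=
  match k with
  | O => fun t => U t 0 x
  | S k => fun t => plus (U t 0 x) (RInt (fun tau => U t tau (Gf tau (pic x k tau))) 0 t)
  end.

Lemma pic_cont x k : continuous_nonneg (pic x k).
Proof.
induction k as [|k IH]; simpl. apply U0_cont.
apply plus_cont. apply U0_cont.
apply (Phi_cont (fun tau => Gf tau (pic x k tau))). apply G_comp_cont. auto.
Qed.

Lemma pic_eq x k t : 0 <= t ->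
  is_RInt (fun tau => U t tau (Gf tau (pic x k tau))) 0 t (minus (pic x (S k) t) (U t 0 x)).
Proof.
intros Ht. replace (minus (pic x (S k) t) (U t 0 x)) with (RInt (fun tau => U t tau (Gf tau (pic x k tau))) 0 t).
apply (U_int (fun tau => Gf tau (pic x k tau))). apply G_comp_cont, pic_cont. auto.
simpl. symmetry. apply e_mpy.
Qed.

Lemma U_growth T : exists MT c, 0 < MT /\ 0 < c /\ forall t tau (v : E), 0 <= tau <= t -> t <= T ->
  norm (U t tau (Gf tau v)) <= MT * c * (1 + norm v).
Proof.
destruct (HUbd T) as [MT [HMT HM]]. destruct HGg as [c [Hc Hg]].
exists MT, c. split; auto. split; auto. intros t tau v Htau Ht.
eapply Rle_trans. apply HM; auto. rewrite Rmult_assoc. apply Rmult_le_compat_l. lra. apply Hg. lra.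
Qed.

Lemma pic_bound x T : exists R0, 0 < R0 /\ forall k s, 0 <= s <= T -> norm (pic x k s) <= R0.
Proof.
destruct (U_growth T) as [MT [c [HMT [Hc Hg]]]].
destruct (HUbd T) as [M' [HM' HM]].
set (K := Rmax MT M').
assert (HK : 0 < K) by (unfold K; eapply Rlt_le_trans; [apply HMT| apply Rmax_l]).
set (A := K * norm x + 1). set (Bc := K * c).
assert (HA : 0 < A) by (unfold A; pose proof (norm_ge_0 x); nra).
assert (HBc : 0 < Bc) by (unfold Bc; nra).
assert (Hind : forall k s, 0 <= s <= T -> norm (pic x k s) <= A * exp (Bc * s) - 1).
{ induction k as [|k IH]; intros s Hs.
  - simpl. assert (1 <= exp (Bc * s)) by (rewrite <- exp_0; apply exp_le; nra).
    eapply Rle_trans. apply HM; lra.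
    assert (M' * norm x <= K * norm x) by (apply Rmult_le_compat_r; [apply norm_ge_0| apply Rmax_r]).
    unfold A in *. pose proof (norm_ge_0 x). nra.
  - assert (Hi := pic_eq x k s (proj1 Hs)).
    eapply Rle_trans. apply (nm_tri_r _ (U s 0 x)).
    apply Rle_trans with (M' * norm x + (0 * s + K * c * A / Bc * (exp (Bc * s) - 1))).
    apply Rplus_le_compat. apply HM; lra.
    apply (norm_int_le (fun tau => U s tau (Gf tau (pic x k tau))) s _ 0 (K * c * A) Bc); auto. lra.
    intros tau Htau. eapply Rle_trans. apply Hg; lra.
    assert (h := IH tau ltac:(lra)).
    assert (MT * c <= K * c) by (apply Rmult_le_compat_r; [lra| apply Rmax_l]).
    assert (0 <= 1 + norm (pic x k tau)) by (pose proof (norm_ge_0 (pic x k tau)); lra).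
    apply Rle_trans with (K * c * (1 + norm (pic x k tau))). apply Rmult_le_compat_r; auto.
    apply Rle_trans with (K * c * (A * exp (Bc * tau))). apply Rmult_le_compat_l. nra. lra. lra.
    assert (M' * norm x <= K * norm x) by (apply Rmult_le_compat_r; [apply norm_ge_0| apply Rmax_r]).
    replace (K * c * A / Bc) with A by (unfold Bc; field; lra). unfold A in *. lra. }
exists (A * exp (Bc * T)). split. apply Rmult_lt_0_compat; auto. apply exp_pos.
intros k s Hs. eapply Rle_trans. apply Hind; auto.
assert (exp (Bc * s) <= exp (Bc * T)) by (apply exp_le; nra). nra.
Qed.

Lemma pic_contr x T : 0 <= T -> exists C, 0 <= C /\ forall k s, 0 <= s <= T ->
  norm (minus (pic x (S k) s) (pic x k s)) <= C * (/2) ^ k.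
Proof.
intros HT.
destruct (pic_bound x T) as [R0 [HR0 Hb]].
destruct (HGl' R0 HR0) as [L [HL HLip]].
destruct (HUbd T) as [MT [HMT HM]].
set (b := MT * L). assert (Hb0 : 0 < b) by (unfold b; nra).
assert (Hind : forall k s, 0 <= s <= T -> norm (minus (pic x (S k) s) (pic x k s)) <= 2 * R0 * (/2) ^ k * exp (2 * b * s)).
{ induction k as [|k IH]; intros s Hs.
  - simpl pow. eapply Rle_trans. apply nm_minus_le.
    assert (1 <= exp (2 * b * s)) by (rewrite <- exp_0; apply exp_le; nra).
    assert (norm (pic x 1 s) <= R0) by (apply Hb; auto).
    assert (norm (pic x 0 s) <= R0) by (apply Hb; auto). simpl pic in *. nra.
  - assert (Hi := is_RInt_minus _ _ _ _ _ _ (pic_eq x (S k) s (proj1 Hs)) (pic_eq x k s (proj1 Hs))).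
    apply (is_RInt_val _ _ _ _ (minus (pic x (S (S k)) s) (pic x (S k) s))) in Hi; [|apply e_mmr].
    set (m := 2 * R0 * (/ 2) ^ k).
    assert (Hm : 0 <= m) by (unfold m; assert (0 < (/2)^k) by (apply pow_lt; lra); nra).
    apply Rle_trans with (0 * s + b * m / (2 * b) * (exp (2 * b * s) - 1)).
    apply (norm_int_le _ s _ 0 (b * m) (2 * b) (proj1 Hs) ltac:(lra) Hi).
    + intros tau Htau. cbv beta.
      rewrite <- U_lin_minus by lra. eapply Rle_trans. apply HM; lra.
      eapply Rle_trans. apply Rmult_le_compat_l. lra. apply HLip. lra. apply Hb; lra. apply Hb; lra.
      eapply Rle_trans. rewrite <- Rmult_assoc. apply Rmult_le_compat_l. nra. apply IH. lra.
      fold m. unfold b. right. ring.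
    + simpl pow. unfold m. replace (b * (2 * R0 * (/ 2) ^ k) / (2 * b)) with (R0 * (/2)^k) by (field; lra).
      assert (0 < (/2)^k) by (apply pow_lt; lra). assert (0 < exp (2 * b * s)) by apply exp_pos. nra. }
exists (2 * R0 * exp (2 * b * T)). split. assert (0 < exp (2 * b * T)) by apply exp_pos. nra.
intros k s Hs. eapply Rle_trans. apply Hind; auto.
assert (exp (2 * b * s) <= exp (2 * b * T)) by (apply exp_le; nra).
assert (0 < (/2)^k) by (apply pow_lt; lra).
apply Rle_trans with (2 * R0 * (/2)^k * exp (2 * b * T)). apply Rmult_le_compat_l; auto. nra.
right; ring.
Qed.

Lemma pic_cauchy x T : 0 <= T -> exists C, 0 <= C /\ forall k p s, 0 <= s <= T ->
  norm (minus (pic x (k + p) s) (pic x k s)) <= 2 * C * ((/2) ^ k - (/2) ^ (k + p)).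
Proof.
intros HT. destruct (pic_contr x T HT) as [C [HC Hc]]. exists C. split; auto.
intros k p s Hs. induction p as [|p IH].
- rewrite Nat.add_0_r, nm_self. lra.
- eapply Rle_trans. apply (nm_tri _ (pic x (k + p) s)).
  rewrite Nat.add_succ_r. eapply Rle_trans. apply Rplus_le_compat. apply Hc; auto. apply IH.
  simpl pow. right. field.
Qed.

Definition pic_lim x t : E := lim (filtermap (fun k => pic x k t) eventually).

Lemma pic_lim_conv x T : 0 <= T -> exists C, 0 <= C /\ forall k s, 0 <= s <= T ->
  norm (minus (pic_lim x s) (pic x k s)) <= 2 * C * (/2) ^ k.
Proof.
intros HT. destruct (pic_cauchy x T HT) as [C [HC Hc]]. exists C. split; auto.
assert (Hc' : forall k n s, (k <= n)%nat -> 0 <= s <= T ->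
   norm (minus (pic x n s) (pic x k s)) <= 2 * C * (/2) ^ k).
{ intros k n s Hkn Hs. replace n with (k + (n - k))%nat by lia. eapply Rle_trans. apply Hc; auto.
  assert (0 < (/2) ^ (k + (n - k))) by (apply pow_lt; lra). nra. }
intros k s Hs.
assert (Hcau : cauchy (filtermap (fun k => pic x k s) eventually)).
{ intros eps. destruct (pow_lt_1_zero (/2) ltac:(rewrite Rabs_right; lra) (eps / (2 * C + 1)))
    as [N HN]. { apply Rdiv_lt_0_compat. apply cond_pos. lra. }
  exists (pic x N s). exists N. intros n Hn. apply (norm_compat1 (K:=R_AbsRing) (V:=E)).
  eapply Rle_lt_trans. apply Hc'; auto.
  specialize (HN N (le_n _)). rewrite Rabs_right in HN by (left; apply pow_lt; lra).
  apply Rle_lt_trans with ((2 * C + 1) * (/2)^N). assert (0 < (/2)^N) by (apply pow_lt; lra). nra.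
  apply Rmult_lt_compat_l with (r := 2 * C + 1) in HN; [|lra].
  replace ((2 * C + 1) * (eps / (2 * C + 1))) with (pos eps) in HN by (field; lra). exact HN. }
assert (Hl := complete_cauchy _ (filtermap_proper_filter _ _ _ _ eventually_filter) Hcau).
fold (pic_lim x s) in Hl.
apply le_of_lt_eps. intros eta Heta.
assert (Hnf : 0 < norm_factor (K:=R_AbsRing) (V:=E)) by apply norm_factor_gt_0.
set (ep := mkposreal (eta / norm_factor (K:=R_AbsRing) (V:=E)) ltac:(apply Rdiv_lt_0_compat; auto)).
destruct (Hl ep) as [N HN].
specialize (HN (max N k) (Nat.le_max_l _ _)).
apply (norm_compat2 (K:=R_AbsRing) (V:=E) _ _ ep) in HN. unfold ep in HN; simpl in HN.
replace (norm_factor * (eta / norm_factor)) with eta in HN by (field; lra).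
unfold pic_lim. eapply Rle_lt_trans. apply (nm_tri _ (pic x (max N k) s)).
rewrite (nm_sym _ (pic x (max N k) s)).
assert (h : norm (minus (pic x (max N k) s) (pic x k s)) <= 2 * C * (/2) ^ k) by (apply Hc'; auto; lia).
eapply Rlt_le_trans. apply Rplus_lt_le_compat. exact HN. exact h. lra.
Qed.

Lemma small_pow (C eps : R) : 0 <= C -> 0 < eps -> exists k, C * (/2) ^ k < eps.
Proof.
intros HC He. destruct (pow_lt_1_zero (/2) ltac:(rewrite Rabs_right; lra) (eps / (C + 1))) as [N HN].
{ apply Rdiv_lt_0_compat; lra. }
exists N. specialize (HN N (le_n _)). rewrite Rabs_right in HN by (left; apply pow_lt; lra).
assert (0 < (/2)^N) by (apply pow_lt; lra).
apply Rle_lt_trans with ((C + 1) * (/2)^N). nra.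
apply Rmult_lt_compat_l with (r := C + 1) in HN; [|lra].
replace ((C + 1) * (eps / (C + 1))) with eps in HN by (field; lra). exact HN.
Qed.

Lemma pic_lim_cont x : continuous_nonneg (pic_lim x).
Proof.
intros t0 Ht0 eps He.
destruct (pic_lim_conv x (t0 + 1) ltac:(lra)) as [C [HC Hc]].
destruct (small_pow (2 * C) (eps / 3) ltac:(lra) ltac:(lra)) as [k Hk].
destruct (pic_cont x k t0 Ht0 (eps / 3) ltac:(lra)) as [d [Hd Hp]].
exists (Rmin d 1). split. apply Rmin_pos; lra. intros s Hs Hst.
assert (Hst1 : Rabs (s - t0) < 1) by (eapply Rlt_le_trans; [apply Hst| apply Rmin_r]).
assert (Hst2 : Rabs (s - t0) < d) by (eapply Rlt_le_trans; [apply Hst| apply Rmin_l]).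
apply Rabs_def2 in Hst1.
eapply Rle_lt_trans. apply (nm_tri _ (pic x k s)).
eapply Rle_lt_trans. apply Rplus_le_compat_l. apply (nm_tri _ (pic x k t0)).
rewrite (nm_sym (pic x k t0)).
assert (h1 := Hc k s ltac:(lra)). assert (h2 := Hc k t0 ltac:(lra)). assert (h3 := Hp s Hs Hst2).
lra.
Qed.

Definition mildU x u := continuous_nonneg u /\ forall t, 0 <= t ->
  is_RInt (fun tau => U t tau (Gf tau (u tau))) 0 t (minus (u t) (U t 0 x)).

Lemma exists_mild x : mildU x (pic_lim x).
Proof.
split. apply pic_lim_cont. intros t Ht.
destruct (pic_lim_conv x t Ht) as [C [HC Hc]].
destruct (pic_bound x t) as [R0 [HR0 Hb]].
assert (Hbl : forall s, 0 <= s <= t -> norm (pic_lim x s) <= R0).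
{ intros s Hs. apply le_of_lt_eps. intros eta Heta.
  destruct (small_pow (2 * C) eta ltac:(lra) Heta) as [k Hk].
  eapply Rle_lt_trans. apply (nm_tri_r _ (pic x k s)). specialize (Hc k s Hs). specialize (Hb k s Hs). lra. }
destruct (HGl' R0 HR0) as [L [HL HLip]].
destruct (HUbd t) as [MT [HMT HM]].
assert (Hg : continuous_nonneg (fun tau => Gf tau (pic_lim x tau))) by (apply G_comp_cont, pic_lim_cont).
assert (Hi := U_int _ t Hg Ht).
eapply is_RInt_val. exact Hi. symmetry. apply nm_eq. intros eps He.
destruct (small_pow (2 * C * (1 + t * (MT * L))) eps) as [k Hk].
{ assert (0 <= t * (MT * L)) by (apply Rmult_le_pos; nra). nra. } auto.
eapply Rle_lt_trans. apply (nm_tri _ (minus (pic x (S k) t) (U t 0 x))).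
rewrite (e_mmr (pic_lim x t) (pic x (S k) t) (U t 0 x)).
assert (Hd := is_RInt_minus _ _ _ _ _ _ (pic_eq x k t Ht) Hi).
assert (h2 : norm (minus (minus (pic x (S k) t) (U t 0 x)) (RInt (fun tau => U t tau (Gf tau (pic_lim x tau))) 0 t))
   <= (t - 0) * (MT * L * (2 * C * (/2) ^ k))).
{ eapply norm_int_cst. lra. exact Hd. intros tau Htau. cbv beta.
  rewrite <- U_lin_minus by lra. eapply Rle_trans. apply HM; lra.
  replace (MT * L * (2 * C * (/2)^k)) with (MT * (L * (2 * C * (/2)^k))) by ring.
  apply Rmult_le_compat_l. lra.
  eapply Rle_trans. apply HLip. lra. apply Hb; lra. apply Hbl; lra.
  apply Rmult_le_compat_l. lra. rewrite nm_sym. apply Hc. lra. }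
assert (h1 : norm (minus (pic_lim x t) (pic x (S k) t)) <= 2 * C * (/2) ^ k).
{ eapply Rle_trans. apply Hc. lra. assert (0 < (/2)^k) by (apply pow_lt; lra). simpl. nra. }
eapply Rle_lt_trans. apply Rplus_le_compat. exact h1. exact h2.
eapply Rle_lt_trans. 2: exact Hk. right. ring.
Qed.

Lemma mild_bound x u T : mildU x u -> 0 <= T -> exists R1, 0 < R1 /\ forall t, 0 <= t <= T -> norm (u t) <= R1.
Proof.
intros [Hc Hi] HT.
destruct (U_growth T) as [MT [c [HMT [Hcc Hg]]]].
destruct (HUbd T) as [M' [HM' HM]].
set (K := Rmax MT M'). assert (HK : 0 < K) by (unfold K; eapply Rlt_le_trans; [apply HMT| apply Rmax_l]).
set (a := K * norm x + K * c * T). set (b := K * c).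
assert (Ha : 0 <= a) by (unfold a; pose proof (norm_ge_0 x); assert (0 <= K * c * T) by (apply Rmult_le_pos; nra); nra).
assert (Hb : 0 < b) by (unfold b; nra).
assert (Hgr := gronwall T a b (fun t => norm (u t)) Hb Ha).
exists (2 * a * exp (2 * b * T) + 1). split. assert (0 < exp (2 * b * T)) by apply exp_pos. nra.
intros t Ht. eapply Rle_trans. apply Hgr; auto.
- intros; apply norm_ge_0.
- apply (contOn_bounded u 0 T HT (cn_contOn u T Hc)).
- intros m Hm Hle t' Ht'. cbv beta.
  eapply Rle_trans. apply (nm_tri_r _ (U t' 0 x)).
  apply Rle_trans with (K * norm x + (K * c * t' + (K * c * m) / (2 * b) * (exp (2 * b * t') - 1))).
  apply Rplus_le_compat.
  + eapply Rle_trans. apply HM; lra. apply Rmult_le_compat_r. apply norm_ge_0. apply Rmax_r.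
  + apply (norm_int_le (fun tau => U t' tau (Gf tau (u tau))) t' _ (K * c) (K * c * m) (2 * b)); try lra.
    apply Hi. lra. intros tau Htau. eapply Rle_trans. apply Hg; lra.
    assert (MT * c <= K * c) by (apply Rmult_le_compat_r; [lra| apply Rmax_l]).
    assert (h := Hle tau ltac:(lra)).
    apply Rle_trans with (K * c * (1 + norm (u tau))). apply Rmult_le_compat_r. pose proof (norm_ge_0 (u tau)); lra. auto.
    assert (0 < K * c) by nra. nra.
  + replace (K * c * m / (2 * b)) with (m / 2) by (unfold b; field; lra).
    assert (K * c * t' <= K * c * T) by (apply Rmult_le_compat_l; nra).
    assert (0 < exp (2 * b * t')) by apply exp_pos. unfold a. nra.
- assert (exp (2 * b * t) <= exp (2 * b * T)) by (apply exp_le; nra). nra.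
Qed.

Lemma mild_unique x u1 u2 : mildU x u1 -> mildU x u2 -> forall t, 0 <= t -> u1 t = u2 t.
Proof.
intros H1 H2 T HT.
destruct (mild_bound x u1 T H1 HT) as [R1 [HR1 Hb1]].
destruct (mild_bound x u2 T H2 HT) as [R2 [HR2 Hb2]].
destruct (HGl' (Rmax R1 R2) ltac:(eapply Rlt_le_trans; [apply HR1| apply Rmax_l])) as [L [HL HLip]].
destruct (HUbd T) as [MT [HMT HM]].
set (b := MT * L). assert (Hb : 0 < b) by (unfold b; nra).
assert (Hgr := gronwall T 0 b (fun t => norm (minus (u1 t) (u2 t))) Hb (Rle_refl _)).
apply nm_eq. intros eps He. eapply Rle_lt_trans. apply Hgr.
- intros; apply norm_ge_0.
- destruct H1 as [Hc1 _]. destruct H2 as [Hc2 _].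
  destruct (contOn_bounded u1 0 T HT (cn_contOn u1 T Hc1)) as [B1 HB1].
  destruct (contOn_bounded u2 0 T HT (cn_contOn u2 T Hc2)) as [B2 HB2].
  exists (B1 + B2). intros s Hs. eapply Rle_trans. apply nm_minus_le. specialize (HB1 s Hs). specialize (HB2 s Hs). lra.
- intros m Hm Hle t Ht. cbv beta.
  assert (Hd := is_RInt_minus _ _ _ _ _ _ (proj2 H1 t (proj1 Ht)) (proj2 H2 t (proj1 Ht))).
  rewrite <- (e_mmr (u1 t) (u2 t) (U t 0 x)).
  eapply Rle_trans. apply (norm_int_le _ t _ 0 (b * m) (2 * b) (proj1 Ht) ltac:(lra) Hd).
  + intros tau Htau. cbv beta. rewrite <- U_lin_minus by lra. eapply Rle_trans. apply HM; lra.
    eapply Rle_trans. apply Rmult_le_compat_l. lra. apply HLip. lra.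
    eapply Rle_trans. apply Hb1; lra. apply Rmax_l. eapply Rle_trans. apply Hb2; lra. apply Rmax_r.
    rewrite <- Rmult_assoc. apply Rle_trans with (MT * L * (m * exp (2 * b * tau))).
    apply Rmult_le_compat_l. unfold b in Hb; lra. apply Hle. lra. unfold b; right; ring.
  + replace (b * m / (2 * b)) with (m / 2) by (field; lra).
    assert (0 < exp (2 * b * t)) by apply exp_pos. nra.
- lra.
- rewrite Rmult_0_r, Rmult_0_l. auto.
Qed.

Lemma mild_bound_expl x u T MT c : 0 <= T -> 0 < MT -> 0 < c ->
  (forall t s y, 0 <= s <= t -> t <= T -> norm (U t s y) <= MT * norm y) ->
  (forall tau v, 0 <= tau -> norm (Gf tau v) <= c * (1 + norm v)) ->
  mildU x u -> forall t, 0 <= t <= T -> norm (u t) <= 2 * (MT * norm x + MT * c * T) * exp (2 * (MT * c) * T).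
Proof.
intros HT HMT Hc HM Hg [Hcu Hi].
set (K := MT). set (a := K * norm x + K * c * T). set (b := K * c).
assert (Ha : 0 <= a) by (unfold a; pose proof (norm_ge_0 x); assert (0 <= K * c * T) by (apply Rmult_le_pos; unfold K; nra); unfold K in *; nra).
assert (Hb : 0 < b) by (unfold b, K; nra).
assert (Hgr := gronwall T a b (fun t => norm (u t)) Hb Ha).
intros t Ht. eapply Rle_trans. apply Hgr; auto.
- intros; apply norm_ge_0.
- apply (contOn_bounded u 0 T HT (cn_contOn u T Hcu)).
- intros m Hm Hle t' Ht'. cbv beta.
  eapply Rle_trans. apply (nm_tri_r _ (U t' 0 x)).
  apply Rle_trans with (K * norm x + (K * c * t' + (K * c * m) / (2 * b) * (exp (2 * b * t') - 1))).
  apply Rplus_le_compat.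
  + apply HM; lra.
  + apply (norm_int_le (fun tau => U t' tau (Gf tau (u tau))) t' _ (K * c) (K * c * m) (2 * b)); try lra.
    apply Hi. lra. intros tau Htau. eapply Rle_trans. apply HM; lra.
    assert (h := Hle tau ltac:(lra)).
    apply Rle_trans with (K * (c * (1 + norm (u tau)))). apply Rmult_le_compat_l. unfold K; lra. apply Hg; lra.
    assert (0 < K * c) by (unfold K; nra). nra.
  + replace (K * c * m / (2 * b)) with (m / 2) by (unfold b; field; unfold K; lra).
    assert (K * c * t' <= K * c * T) by (apply Rmult_le_compat_l; unfold K; nra).
    assert (0 < exp (2 * b * t')) by apply exp_pos. unfold a. nra.
- assert (exp (2 * b * t) <= exp (2 * b * T)) by (apply exp_le; nra). unfold b, a, K in *. nra.
Qed.

End D.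


Lemma list_min {X : Type} (l : list X) (P : X -> R -> Prop) :
  (forall z d d', 0 < d' <= d -> P z d -> P z d') ->
  (forall z, In z l -> exists d, 0 < d /\ P z d) ->
  exists d, 0 < d /\ forall z, In z l -> P z d.
Proof.
intros Hm. induction l as [|z l IH]; intros H.
- exists 1. split. lra. intros z [].
- destruct (H z (or_introl eq_refl)) as [d1 [Hd1 P1]].
  destruct IH as [d2 [Hd2 P2]]. intros; apply H; right; auto.
  exists (Rmin d1 d2). split. apply Rmin_pos; auto.
  intros y [Hy|Hy]. rewrite <- Hy. apply (Hm z d1). split. apply Rmin_pos; auto. apply Rmin_l. auto.
  apply (Hm y d2). split. apply Rmin_pos; auto. apply Rmin_r. auto.
Qed.

Lemma seq_thr (lam : nat -> R) : is_lim_seq lam 0 -> forall e, 0 < e ->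
  exists N, forall n, (N <= n)%nat -> Rabs (lam n) < e.
Proof.
intros H e He. apply is_lim_seq_spec in H. destruct (H (mkposreal e He)) as [N HN].
exists N. intros n Hn. specialize (HN n Hn). simpl in HN. rewrite Rminus_0_r in HN. auto.
Qed.

Section Avg.
Context {E : CompleteNormedModule R_AbsRing}.
Context (Rl : R -> R -> R -> E -> E) (Sh : R -> E -> E) (F : R -> E -> E) (Fh : E -> E)
  (u : R -> E) (T M1 L r c : R).
Hypothesis HT : 0 < T.
Hypothesis HM1 : 0 < M1.
Hypothesis HL : 0 < L.
Hypothesis Hc : 0 < c.
Hypothesis HRbd : forall lam t s y, 0 < lam -> 0 <= s <= t -> t <= T -> norm (Rl lam t s y) <= M1 * norm y.
Hypothesis HSbd : forall h y, 0 <= h <= T -> norm (Sh h y) <= M1 * norm y.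
Hypothesis HSlin : forall h, 0 <= h -> is_linear (Sh h).
Hypothesis HRlin : forall lam t s, 0 < lam -> 0 <= s <= t -> is_linear (Rl lam t s).
Hypothesis HSc0 : forall y eps, 0 < eps -> exists d, 0 < d /\ forall h, 0 <= h < d -> norm (minus (Sh h y) y) < eps.
Hypothesis HA2 : forall (y : E) (T' eps : R), 0 < T' -> 0 < eps -> exists delta, 0 < delta /\
     forall lam (v : E) t s, 0 < lam < delta -> norm (minus v y) < delta ->
       0 <= s <= t -> t <= T' ->
       norm (minus (Rl lam t s v) (Sh (t - s) y)) < eps.
Hypothesis HFl : forall t (x y : E), 0 <= t -> norm x <= r -> norm y <= r ->
     norm (minus (F t x) (F t y)) <= L * norm (minus x y).
Hypothesis HFhl : forall (x y : E), norm x <= r -> norm y <= r ->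
     norm (minus (Fh x) (Fh y)) <= L * norm (minus x y).
Hypothesis HFrc : forall x : E, rel_compact (fun y => exists t, 0 <= t /\ y = F t x).
Hypothesis Hu : continuous_nonneg u.
Hypothesis Hur : forall s, 0 <= s <= T -> norm (u s) <= r.

Definition Ku (y : E) := (exists s tau, 0 <= s /\ 0 <= tau <= T /\ y = F s (u tau)) \/
  (exists tau, 0 <= tau <= T /\ y = Fh (u tau)).

Lemma Fhu_cont : contOn (fun s => Fh (u s)) 0 T.
Proof.
intros t Ht eps He. destruct (Hu t (proj1 Ht) (eps / L) ltac:(apply Rdiv_lt_0_compat; lra)) as [d [Hd Hud]].
exists d. split; auto. intros s Hs Hst. eapply Rle_lt_trans. { apply HFhl; apply Hur; lra. }
assert (h := Hud s (proj1 Hs) Hst).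
apply Rmult_lt_compat_l with (r := L) in h; [|lra].
replace (L * (eps / L)) with eps in h by (field; lra). auto.
Qed.

Lemma TB_Ku : TB Ku.
Proof.
apply TB_union2.
- apply TB_approx. intros eps He.
  destruct (unif_cont u 0 T (cn_contOn u T Hu) (eps / (L + 1)) ltac:(apply Rdiv_lt_0_compat; lra)) as [d [Hd Hud]].
  destruct (grid 0 T d ltac:(lra) Hd) as [N HN].
  exists (fun y => exists i, In i (seq 0 (S N)) /\ (fun i y => exists t, 0 <= t /\ y = F t (u (0 + INR i * d))) i y).
  split.
  + apply TB_union. intros i _. apply TB_of_rel_compact. apply HFrc.
  + intros y [s [tau [Hs [Htau ->]]]]. destruct (HN tau Htau) as [k [Hk [H1 H2]]].
    exists (F s (u (0 + INR k * d))). split.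
    * exists k. split. apply in_seq. lia. exists s. split; auto.
    * assert (0 <= 0 + INR k * d) by (pose proof (pos_INR k); nra).
      eapply Rle_lt_trans. { apply HFl; auto; apply Hur; lra. }
      assert (h := Hud tau (0 + INR k * d) Htau ltac:(lra) ltac:(rewrite Rabs_right; lra)).
      apply Rle_lt_trans with (L * (eps / (L + 1))). apply Rmult_le_compat_l; lra.
      apply Rlt_le_trans with ((L + 1) * (eps / (L + 1))). apply Rmult_lt_compat_r. apply Rdiv_lt_0_compat; lra. lra.
      right. field. lra.
- apply TB_image. lra. apply Fhu_cont.
Qed.

Lemma unif_small rho : 0 < rho -> exists d, 0 < d /\ exists lam0, 0 < lam0 /\
  forall lam y b tau, 0 < lam < lam0 -> Ku y -> 0 <= tau <= b -> b <= T -> b - tau < d ->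
    norm (minus (Rl lam b tau y) y) <= rho /\ norm (minus (Sh (b - tau) y) y) <= rho.
Proof.
intros Hrho. set (e0 := rho / (3 * (M1 + 1))).
assert (He0 : 0 < e0) by (unfold e0; apply Rdiv_lt_0_compat; lra).
assert (He0' : (M1 + 1) * e0 = rho / 3) by (unfold e0; field; lra).
destruct (TB_Ku e0 He0) as [l Hl].
destruct (list_min l (fun z d => forall h, 0 <= h < d -> norm (minus (Sh h z) z) < rho / 3)) as [d1 [Hd1 P1]].
{ intros z d d' Hd' H h Hh. apply H. lra. }
{ intros z _. apply HSc0. lra. }
destruct (list_min l (fun z d => forall lam t s, 0 < lam < d -> 0 <= s <= t -> t <= T ->
     norm (minus (Rl lam t s z) (Sh (t - s) z)) < rho / 3)) as [d2 [Hd2 P2]].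
{ intros z d d' Hd' H lam t s Hlam Hs Ht. apply H; auto. lra. }
{ intros z _. destruct (HA2 z T (rho / 3) HT ltac:(lra)) as [del [Hdel Hdd]].
  exists del. split; auto. intros lam t s Hlam Hs Ht. apply Hdd; auto. rewrite nm_self. auto. }
exists d1. split; auto. exists d2. split; auto.
intros lam y b tau Hlam Hy Htau Hb Hbt.
destruct (Hl y Hy) as [z [Hz Hyz]].
assert (Hsh := P1 z Hz (b - tau) ltac:(lra)).
assert (Hr := P2 z Hz lam b tau Hlam Htau Hb).
assert (HlinR : is_linear (Rl lam b tau)) by (apply HRlin; lra).
assert (HlinS : is_linear (Sh (b - tau))) by (apply HSlin; lra).
assert (Hny : norm (minus (Rl lam b tau y) (Rl lam b tau z)) <= M1 * e0).
{ rewrite <- (linear_minus (K:=R_AbsRing) (U:=E) (V:=E)) by auto.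
  eapply Rle_trans. apply HRbd; lra. apply Rmult_le_compat_l. lra. left; apply Hyz. }
assert (Hsy : norm (minus (Sh (b - tau) y) (Sh (b - tau) z)) <= M1 * e0).
{ rewrite <- (linear_minus (K:=R_AbsRing) (U:=E) (V:=E)) by auto.
  eapply Rle_trans. apply HSbd; lra. apply Rmult_le_compat_l. lra. left; apply Hyz. }
assert (Hyz' : norm (minus z y) < e0) by (rewrite nm_sym; apply Hyz).
split.
- eapply Rle_trans. apply (nm_tri _ (Rl lam b tau z)).
  eapply Rle_trans. apply Rplus_le_compat_l. apply (nm_tri _ (Sh (b - tau) z)).
  eapply Rle_trans. apply Rplus_le_compat_l. apply Rplus_le_compat_l. apply (nm_tri _ z).
  lra.
- eapply Rle_trans. apply (nm_tri _ (Sh (b - tau) z)).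
  eapply Rle_trans. apply Rplus_le_compat_l. apply (nm_tri _ z).
  lra.
Qed.

Hypothesis HFc : forall t (x : E), 0 <= t -> forall eps, 0 < eps -> exists delta, 0 < delta /\
     forall t' (y : E), 0 <= t' -> Rabs (t' - t) < delta -> norm (minus y x) < delta ->
       norm (minus (F t' y) (F t x)) < eps.
Hypothesis HRevo : forall lam t s q y, 0 < lam -> 0 <= q <= s -> s <= t ->
  Rl lam t s (Rl lam s q y) = Rl lam t q y.
Hypothesis HSsg : forall t s y, 0 <= t -> 0 <= s -> Sh (t + s) y = Sh t (Sh s y).

Lemma exRInt_shift (h T' : R) (x : E) : 0 < h -> 0 <= T' -> ex_RInt (fun s => F (s + h) x) 0 T'.
Proof.
intros Hh HT'. apply ex_RInt_continuous. intros z Hz. rewrite Rmin_left, Rmax_right in Hz by lra.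
apply cont_of_eps. intros eps He. destruct (HFc (z + h) x ltac:(lra) eps He) as [d [Hd Hf]].
exists (Rmin d h). split. apply Rmin_pos; lra. intros y Hy.
assert (Hy1 : Rabs (y - z) < d) by (eapply Rlt_le_trans; [apply Hy| apply Rmin_l]).
assert (Hy2 : Rabs (y - z) < h) by (eapply Rlt_le_trans; [apply Hy| apply Rmin_r]).
apply Rabs_def2 in Hy2.
apply Hf. lra. replace (y + h - (z + h)) with (y - z) by ring. auto. rewrite nm_self. auto.
Qed.

Lemma change_var (lam a d : R) (x : E) (I : E) : 0 < lam ->
  is_RInt (fun s => F (s + a / lam) x) 0 (d / lam) I ->
  is_RInt (fun tau => F (tau / lam) x) a (a + d) (scal lam I).
Proof.
intros Hlam HI.
assert (H1 : is_RInt (fun s => F (s + a / lam) x) (/ lam * a + - (a / lam)) (/ lam * (a + d) + - (a / lam)) I).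
{ replace (/ lam * a + - (a / lam)) with 0 by (field; lra).
  replace (/ lam * (a + d) + - (a / lam)) with (d / lam) by (field; lra). exact HI. }
apply is_RInt_comp_lin in H1. apply (is_RInt_scal _ _ _ lam) in H1.
eapply is_RInt_ext. 2: exact H1. intros tau _. cbv beta.
rewrite scal_assoc. replace (mult lam (/ lam)) with 1 by (unfold mult; simpl; field; lra).
transitivity (F (/ lam * tau + - (a / lam) + a / lam) x). apply (scal_one (K:=R_Ring) (V:=E)). f_equal. field. lra.
Qed.

Lemma piece lam t a d x l1 l2 om rho th ka :
  0 < lam -> 0 < a -> 0 < d -> a + d <= t -> t <= T -> x = u a ->
  (forall tau, a <= tau <= a + d -> norm (minus (u tau) x) <= om) ->
  (forall y tau, Ku y -> a <= tau <= a + d ->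
     norm (minus (Rl lam (a + d) tau y) y) <= rho /\ norm (minus (Sh (a + d - tau) y) y) <= rho) ->
  norm (minus (scal (/ (d / lam)) (RInt (fun s => F (s + a / lam) x) 0 (d / lam))) (Fh x)) <= th ->
  norm (minus (Rl lam t (a + d) (Fh x)) (Sh (t - (a + d)) (Fh x))) <= ka ->
  is_RInt (fun tau => Rl lam t tau (F (tau / lam) (u tau))) a (a + d) l1 ->
  is_RInt (fun tau => Sh (t - tau) (Fh (u tau))) a (a + d) l2 ->
  norm (minus l1 l2) <= d * (2 * (M1 * L * om) + 2 * (M1 * rho) + M1 * th + ka).
Proof.
intros Hlam Ha Hd Hadt HtT Hx Hom Hrho Hth Hka Hl1 Hl2.
assert (Hxr : norm x <= r) by (rewrite Hx; apply Hur; lra).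
set (b := a + d) in *.
set (Iavg := RInt (fun s => F (s + a / lam) x) 0 (d / lam)).
assert (HI : is_RInt (fun s => F (s + a / lam) x) 0 (d / lam) Iavg).
{ apply RInt_correct. apply exRInt_shift. apply Rdiv_lt_0_compat; lra. left; apply Rdiv_lt_0_compat; lra. }
assert (HQ := change_var lam a d x Iavg Hlam HI). fold b in HQ.
assert (HlinRb : is_linear (Rl lam t b)) by (apply HRlin; unfold b in *; lra).
assert (Hg1 := is_RInt_lin (Rl lam t b) _ _ _ _ HlinRb HQ).
assert (Hg2 := is_RInt_const a b (Sh (t - b) (Fh x))).
assert (Hd1 := is_RInt_minus _ _ _ _ _ _ Hl1 Hg1).
assert (Hd3 := is_RInt_minus _ _ _ _ _ _ Hg2 Hl2).
assert (N1 : norm (minus l1 (Rl lam t b (scal lam Iavg))) <= (b - a) * (M1 * L * om + M1 * rho)).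
{ eapply norm_int_cst. unfold b in *; lra. exact Hd1. intros tau Htau. cbv beta.
  assert (HlinRt : is_linear (Rl lam t tau)) by (apply HRlin; unfold b in *; lra).
  eapply Rle_trans. apply (nm_tri _ (Rl lam t tau (F (tau / lam) x))). apply Rplus_le_compat.
  - rewrite <- (linear_minus (K:=R_AbsRing) (U:=E) (V:=E)) by auto.
    eapply Rle_trans. apply HRbd; unfold b in *; lra.
    rewrite Rmult_assoc. apply Rmult_le_compat_l. lra.
    eapply Rle_trans. apply HFl. apply Rdiv_le_0_compat; unfold b in *; lra. apply Hur; unfold b in *; lra. auto.
    apply Rmult_le_compat_l. lra. apply Hom. auto.
  - rewrite <- (HRevo lam t b tau) by (unfold b in *; lra).
    rewrite <- (linear_minus (K:=R_AbsRing) (U:=E) (V:=E)) by auto.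
    eapply Rle_trans. apply HRbd; unfold b in *; lra.
    apply Rmult_le_compat_l. lra. apply (Hrho (F (tau / lam) x) tau); auto.
    left. exists (tau / lam), a. split. apply Rdiv_le_0_compat; unfold b in *; lra. split. lra. rewrite Hx; auto. }
assert (N3 : norm (minus (scal (b - a) (Sh (t - b) (Fh x))) l2) <= (b - a) * (M1 * rho + M1 * L * om)).
{ eapply norm_int_cst. unfold b in *; lra. exact Hd3. intros tau Htau. cbv beta.
  assert (HlinS : is_linear (Sh (t - tau))) by (apply HSlin; unfold b in *; lra).
  eapply Rle_trans. apply (nm_tri _ (Sh (t - tau) (Fh x))). apply Rplus_le_compat.
  - replace (t - tau) with ((t - b) + (b - tau)) by ring. rewrite HSsg by (unfold b in *; lra).
    assert (HlinS' : is_linear (Sh (t - b))) by (apply HSlin; unfold b in *; lra).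
    rewrite <- (linear_minus (K:=R_AbsRing) (U:=E) (V:=E)) by auto.
    eapply Rle_trans. apply HSbd; unfold b in *; lra.
    apply Rmult_le_compat_l. lra. eapply Rle_trans. right. apply nm_sym. apply (Hrho (Fh x) tau); auto.
    right. exists a. split. lra. rewrite Hx; auto.
  - rewrite <- (linear_minus (K:=R_AbsRing) (U:=E) (V:=E)) by auto.
    eapply Rle_trans. apply HSbd; unfold b in *; lra.
    rewrite Rmult_assoc. apply Rmult_le_compat_l. lra.
    eapply Rle_trans. apply HFhl. auto. apply Hur; unfold b in *; lra.
    apply Rmult_le_compat_l. lra. eapply Rle_trans. right. apply nm_sym. apply Hom. auto. }
set (avg := scal (/ (d / lam)) Iavg) in *.
assert (Havg : scal lam Iavg = scal d avg).
{ unfold avg. rewrite scal_assoc. f_equal. unfold mult; simpl. field; lra. }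
assert (Hba : b - a = d) by (unfold b; ring).
assert (N2 : norm (minus (Rl lam t b (scal lam Iavg)) (scal (b - a) (Sh (t - b) (Fh x)))) <= d * (M1 * th + ka)).
{ rewrite Havg, Hba. rewrite (linear_scal (K:=R_AbsRing) (U:=E) (V:=E) (Rl lam t b) HlinRb).
  eapply Rle_trans. apply nm_scal_minus. rewrite Rabs_right by lra. apply Rmult_le_compat_l. lra.
  eapply Rle_trans. apply (nm_tri _ (Rl lam t b (Fh x))). apply Rplus_le_compat; auto.
  rewrite <- (linear_minus (K:=R_AbsRing) (U:=E) (V:=E)) by auto.
  eapply Rle_trans. apply HRbd; unfold b in *; lra. apply Rmult_le_compat_l. lra. exact Hth. }
eapply Rle_trans. right. apply (f_equal norm (e_split3 l1 l2 (Rl lam t b (scal lam Iavg)) (scal (b - a) (Sh (t - b) (Fh x))))).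
eapply Rle_trans. apply nm_plus. eapply Rle_trans. apply Rplus_le_compat_r. apply nm_plus.
eapply Rle_trans. apply Rplus_le_compat. apply Rplus_le_compat. exact N1. exact N2. exact N3.
rewrite Hba. right. ring.
Qed.

Lemma ex_sub (f : R -> E) p q t : 0 <= p <= q -> q <= t -> ex_RInt f 0 t -> ex_RInt f p q.
Proof.
intros Hpq Hqt H. apply (ex_RInt_Chasles_1 f p q t). lra.
apply (ex_RInt_Chasles_2 f 0 p t). lra. auto.
Qed.

Hypothesis HRc : forall lam, 0 < lam -> forall x t s, 0 <= s <= t -> forall eps, 0 < eps -> exists d, 0 < d /\
  forall t' s', 0 <= s' <= t' -> Rabs (t' - t) < d -> Rabs (s' - s) < d ->
    norm (minus (Rl lam t' s' x) (Rl lam t s x)) < eps.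
Hypothesis HSc : forall x t s, 0 <= s <= t -> forall eps, 0 < eps -> exists d, 0 < d /\
  forall t' s', 0 <= s' <= t' -> Rabs (t' - t) < d -> Rabs (s' - s) < d ->
    norm (minus (Sh (t' - s') x) (Sh (t - s) x)) < eps.
Hypothesis HRbdG : forall lam, 0 < lam -> forall T', exists MT, 0 < MT /\ forall t s x, 0 <= s <= t -> t <= T' ->
  norm (Rl lam t s x) <= MT * norm x.
Hypothesis HSbdG : forall T', exists MT, 0 < MT /\ forall t s x, 0 <= s <= t -> t <= T' ->
  norm (Sh (t - s) x) <= MT * norm x.
Hypothesis HFg : forall t (v : E), 0 <= t -> norm (F t v) <= c * (1 + norm v).
Hypothesis HFhg : forall (v : E), norm (Fh v) <= c * (1 + norm v).
Hypothesis HFhc : forall x eps, 0 < eps -> exists d, 0 < d /\ forall y, norm (minus y x) < d ->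
  norm (minus (Fh y) (Fh x)) < eps.
Hypothesis HFav : forall (y : E) eps, 0 < eps -> exists T0 delta, 0 < delta /\
     forall T' (v : E) h, T0 < T' -> 0 < T' -> norm (minus v y) < delta -> 0 < h ->
       norm (minus (scal (/ T') (RInt (fun tau => F (tau + h) v) 0 T')) (Fh y)) < eps.

Lemma f1_int lam t : 0 < lam -> 0 <= t -> ex_RInt (fun tau => Rl lam t tau (F (tau / lam) (u tau))) 0 t.
Proof.
intros Hlam Ht. eexists.
apply (U_int (Rl lam) (fun t s H => HRlin lam t s Hlam H) (HRbdG lam Hlam) (HRc lam Hlam)
   (fun tau => F (tau / lam) (u tau))); auto.
apply (G_comp_cont (fun tau x => F (tau / lam) x)); auto.
intros t0 x Ht0 eps He. destruct (HFc (t0 / lam) x ltac:(apply Rdiv_le_0_compat; lra) eps He) as [d [Hd Hf]].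
exists (Rmin d (d * lam)). split. apply Rmin_pos; nra. intros t' y Ht' Htt Hy.
apply Hf. apply Rdiv_le_0_compat; lra.
replace (t' / lam - t0 / lam) with ((t' - t0) / lam) by (field; lra).
unfold Rdiv. rewrite Rabs_mult, Rabs_inv, (Rabs_right lam) by lra.
apply Rmult_lt_reg_r with lam. lra. rewrite Rmult_assoc, Rinv_l, Rmult_1_r by lra.
eapply Rlt_le_trans. apply Htt. rewrite Rmult_comm. apply Rmin_r.
eapply Rlt_le_trans. apply Hy. apply Rmin_l.
Qed.

Lemma f2_int t : 0 <= t -> ex_RInt (fun tau => Sh (t - tau) (Fh (u tau))) 0 t.
Proof.
intros Ht. eexists.
apply (U_int (fun t s => Sh (t - s)) (fun t s H => HSlin (t - s) ltac:(lra)) HSbdG HSc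
   (fun tau => Fh (u tau))); auto.
apply (G_comp_cont (fun _ x => Fh x)); auto.
intros t0 x Ht0 eps He. destruct (HFhc x eps He) as [d [Hd Hf]].
exists d. split; auto.
Qed.

Lemma averaging eps : 0 < eps -> exists lam0, 0 < lam0 /\ forall lam, 0 < lam < lam0 ->
  forall t, 0 <= t <= T ->
  norm (minus (RInt (fun tau => Rl lam t tau (F (tau / lam) (u tau))) 0 t)
              (RInt (fun tau => Sh (t - tau) (Fh (u tau))) 0 t)) <= eps.
Proof.
intros He.
set (Cb := c * (1 + r)).
assert (Hr0 : 0 <= r) by (eapply Rle_trans; [apply (norm_ge_0 (u 0))| apply (Hur 0); lra]).
assert (HCb : 0 < Cb) by (unfold Cb; nra).
set (eta := eps / (2 * T)).
assert (Heta : 0 < eta) by (unfold eta; apply Rdiv_lt_0_compat; lra).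
set (om := eta / (8 * (M1 * L))). set (rho := eta / (8 * M1)). set (th := eta / (4 * M1)). set (ka := eta / 4).
assert (Hom : 0 < om) by (unfold om; apply Rdiv_lt_0_compat; nra).
assert (Hrho : 0 < rho) by (unfold rho; apply Rdiv_lt_0_compat; nra).
assert (Hth : 0 < th) by (unfold th; apply Rdiv_lt_0_compat; nra).
assert (Hka : 0 < ka) by (unfold ka; lra).
assert (Hsum : 2 * (M1 * L * om) + 2 * (M1 * rho) + M1 * th + ka = eta).
{ unfold om, rho, th, ka. field. nra. }
destruct (unif_cont u 0 T (cn_contOn u T Hu) om Hom) as [du [Hdu Hud]].
destruct (unif_small rho Hrho) as [dr [Hdr [lamr [Hlamr Hus]]]].
set (d := Rmin (Rmin du dr) (Rmin (eps / (16 * (M1 * Cb))) T) / 2).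
assert (Hd0 : 0 < Rmin (Rmin du dr) (Rmin (eps / (16 * (M1 * Cb))) T)).
{ repeat apply Rmin_pos; try lra. apply Rdiv_lt_0_compat; nra. }
assert (Hd : 0 < d) by (unfold d; lra).
assert (Hddu : d < du).
{ unfold d. assert (Rmin (Rmin du dr) (Rmin (eps / (16 * (M1 * Cb))) T) <= du)
    by (eapply Rle_trans; apply Rmin_l). lra. }
assert (Hddr : d < dr).
{ unfold d. assert (Rmin (Rmin du dr) (Rmin (eps / (16 * (M1 * Cb))) T) <= dr)
    by (eapply Rle_trans; [apply Rmin_l| apply Rmin_r]). lra. }
assert (HdC : 4 * (M1 * Cb) * d <= eps / 4).
{ unfold d. assert (Rmin (Rmin du dr) (Rmin (eps / (16 * (M1 * Cb))) T) <= eps / (16 * (M1 * Cb)))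
    by (eapply Rle_trans; [apply Rmin_r| apply Rmin_l]).
  assert (0 < M1 * Cb) by nra.
  apply Rle_trans with (4 * (M1 * Cb) * (eps / (16 * (M1 * Cb)) / 2)).
  apply Rmult_le_compat_l; lra. replace (4 * (M1 * Cb) * (eps / (16 * (M1 * Cb)) / 2)) with (eps / 8) by (field; lra). lra. }
assert (HT0 : 0 <= T / d) by (apply Rdiv_le_0_compat; lra).
destruct (nfloor_ex (T / d) HT0) as [Nd HNd].
set (xk := fun k : nat => u (INR k * d)).
destruct (list_min (seq 0 (S Nd)) (fun k l => forall lam, 0 < lam < l -> forall h, 0 < h ->
   norm (minus (scal (/ (d / lam)) (RInt (fun s => F (s + h) (xk k)) 0 (d / lam))) (Fh (xk k))) <= th))
  as [lth [Hlth Pth]].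
{ intros z l l' Hl H lam Hlam. apply H. lra. }
{ intros k _. destruct (HFav (xk k) th Hth) as [T0 [del [Hdel Hav]]].
  exists (d / (Rabs T0 + 1)). split. apply Rdiv_lt_0_compat; auto. pose proof (Rabs_pos T0); lra.
  intros lam Hlam h Hh. left. apply Hav; auto.
  - assert (h1 : lam * (Rabs T0 + 1) < d).
    { destruct Hlam as [_ Hlam2]. apply Rmult_lt_compat_r with (r := Rabs T0 + 1) in Hlam2. 2: pose proof (Rabs_pos T0); lra.
      replace (d / (Rabs T0 + 1) * (Rabs T0 + 1)) with d in Hlam2 by (field; pose proof (Rabs_pos T0); lra). lra. }
    apply Rmult_lt_reg_r with lam. lra. unfold Rdiv. rewrite Rmult_assoc, Rinv_l, Rmult_1_r by lra.
    pose proof (Rle_abs T0). nra.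
  - apply Rdiv_lt_0_compat; lra.
  - rewrite nm_self; auto. }
destruct (list_min (seq 0 (S Nd)) (fun k l => forall lam, 0 < lam < l -> forall t s, 0 <= s <= t -> t <= T ->
   norm (minus (Rl lam t s (Fh (xk k))) (Sh (t - s) (Fh (xk k)))) <= ka))
  as [lka [Hlka Pka]].
{ intros z l l' Hl H lam Hlam. apply H. lra. }
{ intros k _. destruct (HA2 (Fh (xk k)) T ka HT Hka) as [del [Hdel Hd2]].
  exists del. split; auto. intros lam Hlam t s Hs Ht. left. apply Hd2; auto. rewrite nm_self; auto. }
exists (Rmin lamr (Rmin lth lka)). split. repeat apply Rmin_pos; auto.
intros lam Hlam t Ht.
assert (Hlr : lam < lamr) by (eapply Rlt_le_trans; [apply Hlam| apply Rmin_l]).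
assert (Hlt : lam < lth) by (eapply Rlt_le_trans; [apply Hlam| eapply Rle_trans; [apply Rmin_r| apply Rmin_l]]).
assert (Hlk : lam < lka) by (eapply Rlt_le_trans; [apply Hlam| eapply Rle_trans; [apply Rmin_r| apply Rmin_r]]).
assert (Hl0 : 0 < lam) by lra.
set (f1 := fun tau => Rl lam t tau (F (tau / lam) (u tau))).
set (f2 := fun tau => Sh (t - tau) (Fh (u tau))).
assert (E1 := f1_int lam t Hl0 (proj1 Ht)). fold f1 in E1.
assert (E2 := f2_int t (proj1 Ht)). fold f2 in E2.
set (Iv := fun p q => minus (RInt f1 p q) (RInt f2 p q)).
assert (Hch : forall p q s, 0 <= p <= q -> q <= s -> s <= t -> Iv p s = plus (Iv p q) (Iv q s)).
{ intros p q s0 Hpq Hqs Hst. unfold Iv.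
  rewrite <- (RInt_Chasles f1 p q s0), <- (RInt_Chasles f2 p q s0).
  apply e_mpp.
  all: apply (ex_sub _ _ _ t); auto; lra. }
assert (Hbd : forall p q, 0 <= p <= q -> q <= t -> norm (Iv p q) <= (q - p) * (2 * (M1 * Cb))).
{ intros p q Hpq Hqt. unfold Iv.
  assert (Hi := is_RInt_minus _ _ _ _ _ _ (RInt_correct _ _ _ (ex_sub f1 p q t Hpq Hqt E1))
                   (RInt_correct _ _ _ (ex_sub f2 p q t Hpq Hqt E2))).
  eapply norm_int_cst. lra. exact Hi. intros tau Htau. cbv beta.
  eapply Rle_trans. apply nm_minus_le. unfold f1, f2.
  assert (norm (u tau) <= r) by (apply Hur; lra).
  replace (2 * (M1 * Cb)) with (M1 * Cb + M1 * Cb) by ring. apply Rplus_le_compat.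
  - eapply Rle_trans. apply HRbd; lra. apply Rmult_le_compat_l. lra.
    eapply Rle_trans. apply HFg. apply Rdiv_le_0_compat; lra. unfold Cb. apply Rmult_le_compat_l; lra.
  - eapply Rle_trans. apply HSbd; lra. apply Rmult_le_compat_l. lra.
    eapply Rle_trans. apply HFhg. unfold Cb. apply Rmult_le_compat_l; lra. }
assert (Hpc : forall j, (1 <= j)%nat -> INR j * d + d <= t ->
   norm (Iv (INR j * d) (INR j * d + d)) <= d * eta).
{ intros j Hj Hjt.
  assert (HjN : (j <= Nd)%nat).
  { assert (INR j * d <= T) by lra.
    assert (INR j <= T / d). { apply Rmult_le_reg_r with d; auto. unfold Rdiv; rewrite Rmult_assoc, Rinv_l, Rmult_1_r by lra. lra. }
    assert (INR j < INR Nd + 1) by lra. rewrite <- S_INR in H1. apply INR_lt in H1. lia. }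
  assert (Hj1 : 1 <= INR j) by (replace 1 with (INR 1) by reflexivity; apply le_INR; auto).
  rewrite <- Hsum.
  apply (piece lam t (INR j * d) d (xk j)); auto.
  - nra.
  - lra.
  - intros tau Htau. left. unfold xk. apply Hud. split; nra. split; nra. rewrite Rabs_right; lra.
  - intros y tau Hy Htau. apply Hus; auto; try lra; split; nra.
  - apply (Pth j). apply in_seq; lia. lra. apply Rdiv_lt_0_compat; nra.
  - apply (Pka j). apply in_seq; lia. lra. split; nra. lra.
  - apply RInt_correct. apply (ex_sub f1 _ _ t); auto. split; nra.
  - apply RInt_correct. apply (ex_sub f2 _ _ t); auto. split; nra. }
assert (Hmid : forall j, (1 <= j)%nat -> INR j * d <= t -> norm (Iv d (INR j * d)) <= (INR j - 1) * d * eta).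
{ induction j as [|j IH]; intros Hj Hjt. lia.
  destruct (Nat.eq_dec j 0) as [->|Hj0].
  - simpl. unfold Iv. rewrite Rmult_1_l, !RInt_point, nm_self. lra.
  - rewrite S_INR in *. assert (Hj1 : (1 <= j)%nat) by lia.
    rewrite (Hch d (INR j * d) ((INR j + 1) * d)).
    + eapply Rle_trans. apply nm_plus.
      replace ((INR j + 1) * d) with (INR j * d + d) by ring.
      eapply Rle_trans. apply Rplus_le_compat. apply IH; auto. lra. apply Hpc; auto. lra.
      right. ring.
    + assert (1 <= INR j) by (replace 1 with (INR 1) by reflexivity; apply le_INR; auto). nra.
    + nra.
    + lra. }
destruct (nfloor_ex (t / d) ltac:(apply Rdiv_le_0_compat; lra)) as [m Hm].
assert (Hmd : INR m * d <= t < INR m * d + d).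
{ destruct Hm as [Hm1 Hm2]. split.
  - apply Rmult_le_compat_r with (r := d) in Hm1; [|lra]. unfold Rdiv in Hm1. rewrite Rmult_assoc, Rinv_l, Rmult_1_r in Hm1 by lra. lra.
  - apply Rmult_lt_compat_r with (r := d) in Hm2; [|lra]. unfold Rdiv in Hm2. rewrite Rmult_assoc, Rinv_l, Rmult_1_r in Hm2 by lra. lra. }
fold f1 f2. fold (Iv 0 t).
destruct (Nat.eq_dec m 0) as [->|Hm0].
- simpl in Hmd. eapply Rle_trans. apply Hbd. lra. lra.
  apply Rle_trans with (d * (2 * (M1 * Cb))). apply Rmult_le_compat_r. nra. lra. nra.
- assert (Hm1 : 1 <= INR m) by (replace 1 with (INR 1) by reflexivity; apply le_INR; lia).
  rewrite (Hch 0 d t); [| lra| nra| lra].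
  rewrite (Hch d (INR m * d) t); [| nra| lra| lra].
  eapply Rle_trans. apply nm_plus. eapply Rle_trans. apply Rplus_le_compat_l. apply nm_plus.
  eapply Rle_trans. apply Rplus_le_compat. apply Hbd. lra. nra. apply Rplus_le_compat.
  apply Hmid. lia. lra. apply Hbd. nra. lra.
  assert ((INR m - 1) * d * eta <= T * eta) by (apply Rmult_le_compat_r; nra).
  assert (T * eta = eps / 2) by (unfold eta; field; lra).
  assert ((t - INR m * d) * (2 * (M1 * Cb)) <= d * (2 * (M1 * Cb))) by (apply Rmult_le_compat_r; nra).
  nra.
Qed.

End Avg.



Lemma exp_bound (w T' t s : R) : 0 <= s <= t -> t <= T' -> exp (w * (t - s)) <= exp (Rabs w * Rabs T').
Proof.
intros Hs Ht. apply exp_le. pose proof (Rle_abs w). pose proof (Rle_abs T'). pose proof (Rabs_pos w).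
apply Rle_trans with (Rabs w * (t - s)).
destruct (Rle_dec 0 w). rewrite Rabs_right by lra. lra. rewrite Rabs_left by lra. nra.
apply Rmult_le_compat_l; lra.
Qed.

Section Main.
Context {E : CompleteNormedModule R_AbsRing}.
Context (Rl : R -> R -> R -> E -> E) (Sh : R -> E -> E) (F : R -> E -> E) (Fh : E -> E) (M w c : R).
Hypothesis Hevo : forall lam, 0 < lam -> evolution_system (Rl lam).
Hypothesis HM1 : 1 <= M.
Hypothesis HA1 : forall lam t s x, 0 < lam -> 0 <= s <= t ->
       norm (Rl lam t s x) <= M * exp (w * (t - s)) * norm x.
Hypothesis HC0 : C0_semigroup Sh.
Hypothesis HA2 : forall (u : E) (T eps : R), 0 < T -> 0 < eps -> exists delta, 0 < delta /\
     forall lam (v : E) t s, 0 < lam < delta -> norm (minus v u) < delta ->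
       0 <= s <= t -> t <= T ->
       norm (minus (Rl lam t s v) (Sh (t - s) u)) < eps.
Hypothesis HFc : forall t (x : E), 0 <= t -> forall eps, 0 < eps -> exists delta, 0 < delta /\
     forall t' (y : E), 0 <= t' -> Rabs (t' - t) < delta -> norm (minus y x) < delta ->
       norm (minus (F t' y) (F t x)) < eps.
Hypothesis HFl : forall r, 0 < r -> exists L, forall t (x y : E), 0 <= t -> norm x <= r -> norm y <= r ->
     norm (minus (F t x) (F t y)) <= L * norm (minus x y).
Hypothesis Hc : 0 < c.
Hypothesis HFg : forall t (v : E), 0 <= t -> norm (F t v) <= c * (1 + norm v).
Hypothesis HFav : forall (u : E) eps, 0 < eps -> exists T0 delta, 0 < delta /\
     forall T (v : E) h, T0 < T -> 0 < T -> norm (minus v u) < delta -> 0 < h ->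
       norm (minus (scal (/ T) (RInt (fun tau => F (tau + h) v) 0 T)) (Fh u)) < eps.

Definition MT (T' : R) := M * exp (Rabs w * Rabs T').

Lemma MT_pos T' : 0 < MT T'.
Proof. unfold MT. assert (0 < exp (Rabs w * Rabs T')) by apply exp_pos. nra. Qed.

Lemma Rl_unif T' lam t s x : 0 < lam -> 0 <= s <= t -> t <= T' -> norm (Rl lam t s x) <= MT T' * norm x.
Proof.
intros Hl Hs Ht. eapply Rle_trans. apply HA1; auto. apply Rmult_le_compat_r. apply norm_ge_0.
unfold MT. apply Rmult_le_compat_l. lra. apply exp_bound; auto.
Qed.

Lemma Sh_bound h x : 0 <= h -> norm (Sh h x) <= M * exp (w * h) * norm x.
Proof.
intros Hh. apply le_of_lt_eps. intros eta Heta.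
destruct (HA2 x (h + 1) eta ltac:(lra) Heta) as [d [Hd H]].
assert (H1 := H (d / 2) x h 0 ltac:(lra) ltac:(rewrite nm_self; lra) ltac:(lra) ltac:(lra)).
rewrite Rminus_0_r in H1.
eapply Rle_lt_trans. apply (nm_tri_r _ (Rl (d / 2) h 0 x)).
assert (H2 := HA1 (d / 2) h 0 x ltac:(lra) ltac:(lra)). rewrite Rminus_0_r in H2.
rewrite nm_sym. lra.
Qed.

Lemma Sh_unif T' t s x : 0 <= s <= t -> t <= T' -> norm (Sh (t - s) x) <= MT T' * norm x.
Proof.
intros Hs Ht. eapply Rle_trans. apply Sh_bound. lra. apply Rmult_le_compat_r. apply norm_ge_0.
unfold MT. apply Rmult_le_compat_l. lra. apply exp_bound; auto.
Qed.

Lemma Rl_lin lam t s : 0 < lam -> 0 <= s <= t -> is_linear (Rl lam t s).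
Proof. intros Hl Hs. apply lin_of_bl. apply (proj1 (Hevo lam Hl)). auto. Qed.

Lemma Sh_lin h : 0 <= h -> is_linear (Sh h).
Proof. intros Hh. apply lin_of_bl. apply (proj1 HC0). auto. Qed.

Lemma Rl_cont lam : 0 < lam -> forall x t s, 0 <= s <= t -> forall eps, 0 < eps -> exists d, 0 < d /\
  forall t' s', 0 <= s' <= t' -> Rabs (t' - t) < d -> Rabs (s' - s) < d ->
    norm (minus (Rl lam t' s' x) (Rl lam t s x)) < eps.
Proof. intros Hl. destruct (Hevo lam Hl) as [_ [_ [_ H]]]. intros x t s Hs. apply H; auto. Qed.

Lemma Sh_cont : forall x t s, 0 <= s <= t -> forall eps, 0 < eps -> exists d, 0 < d /\
  forall t' s', 0 <= s' <= t' -> Rabs (t' - t) < d -> Rabs (s' - s) < d ->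
    norm (minus (Sh (t' - s') x) (Sh (t - s) x)) < eps.
Proof.
intros x t s Hs eps He.
destruct (HA2 x (t + 1) (eps / 3) ltac:(lra) ltac:(lra)) as [d [Hd H]].
destruct (Rl_cont (d / 2) ltac:(lra) x t s Hs (eps / 3) ltac:(lra)) as [d2 [Hd2 H2]].
exists (Rmin d2 1). split. apply Rmin_pos; lra. intros t' s' Hs' Ht' Hss'.
assert (Ht1 : Rabs (t' - t) < 1) by (eapply Rlt_le_trans; [apply Ht'| apply Rmin_r]).
apply Rabs_def2 in Ht1.
assert (a1 := H (d / 2) x t' s' ltac:(lra) ltac:(rewrite nm_self; lra) Hs' ltac:(lra)).
assert (a2 := H (d / 2) x t s ltac:(lra) ltac:(rewrite nm_self; lra) Hs ltac:(lra)).
assert (a3 := H2 t' s' Hs' ltac:(eapply Rlt_le_trans; [apply Ht'| apply Rmin_l]) ltac:(eapply Rlt_le_trans; [apply Hss'| apply Rmin_l])).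
eapply Rle_lt_trans. apply (nm_tri _ (Rl (d / 2) t' s' x)).
eapply Rle_lt_trans. apply Rplus_le_compat_l. apply (nm_tri _ (Rl (d / 2) t s x)).
rewrite (nm_sym _ (Rl (d / 2) t' s' x)). lra.
Qed.

Lemma avg_int (x : E) T' : 0 <= T' -> is_RInt (fun tau => F (tau + 1) x) 0 T' (RInt (fun tau => F (tau + 1) x) 0 T').
Proof. intros HT. apply RInt_correct. apply (exRInt_shift F HFc). lra. auto. Qed.

Lemma avg_norm (x : E) T' : 0 < T' ->
  norm (scal (/ T') (RInt (fun tau => F (tau + 1) x) 0 T')) <= c * (1 + norm x).
Proof.
intros HT. eapply Rle_trans. apply norm_scal_R. rewrite Rabs_right by (left; apply Rinv_0_lt_compat; lra).
apply Rle_trans with (/ T' * ((T' - 0) * (c * (1 + norm x)))).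
apply Rmult_le_compat_l. left; apply Rinv_0_lt_compat; lra.
eapply norm_int_cst. lra. apply avg_int. lra. intros s Hs. apply HFg. lra.
right. field. lra.
Qed.

Lemma Fh_growth (v : E) : norm (Fh v) <= c * (1 + norm v).
Proof.
apply le_of_lt_eps. intros eta Heta.
destruct (HFav v eta Heta) as [T0 [del [Hdel H]]].
set (T' := Rabs T0 + 1).
assert (HT' : 0 < T') by (unfold T'; pose proof (Rabs_pos T0); lra).
assert (h := H T' v 1 ltac:(unfold T'; pose proof (Rle_abs T0); lra) HT' ltac:(rewrite nm_self; lra) ltac:(lra)).
eapply Rle_lt_trans. apply (nm_tri_r _ (scal (/ T') (RInt (fun tau => F (tau + 1) v) 0 T'))).
rewrite nm_sym. apply Rplus_le_lt_compat. apply avg_norm; auto. exact h.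
Qed.

Lemma Fh_lip r : 0 < r -> exists L, 0 < L /\
  (forall t (x y : E), 0 <= t -> norm x <= r -> norm y <= r -> norm (minus (F t x) (F t y)) <= L * norm (minus x y)) /\
  (forall (x y : E), norm x <= r -> norm y <= r -> norm (minus (Fh x) (Fh y)) <= L * norm (minus x y)).
Proof.
intros Hr. destruct (HFl r Hr) as [L0 HL0].
exists (Rabs L0 + 1). split. pose proof (Rabs_pos L0); lra.
assert (HL : forall t (x y : E), 0 <= t -> norm x <= r -> norm y <= r -> norm (minus (F t x) (F t y)) <= (Rabs L0 + 1) * norm (minus x y)).
{ intros t x y Ht Hx Hy. eapply Rle_trans. apply HL0; auto. apply Rmult_le_compat_r. apply norm_ge_0. pose proof (Rle_abs L0); lra. }
split; auto. intros x y Hx Hy. apply le_of_lt_eps. intros eta Heta.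
destruct (HFav x (eta / 2) ltac:(lra)) as [T0 [del [Hdel H]]].
destruct (HFav y (eta / 2) ltac:(lra)) as [T1 [del1 [Hdel1 H1]]].
set (T' := Rabs T0 + Rabs T1 + 1).
assert (HT' : 0 < T') by (unfold T'; pose proof (Rabs_pos T0); pose proof (Rabs_pos T1); lra).
assert (hx := H T' x 1 ltac:(unfold T'; pose proof (Rle_abs T0); pose proof (Rabs_pos T1); lra) HT' ltac:(rewrite nm_self; lra) ltac:(lra)).
assert (hy := H1 T' y 1 ltac:(unfold T'; pose proof (Rle_abs T1); pose proof (Rabs_pos T0); lra) HT' ltac:(rewrite nm_self; lra) ltac:(lra)).
set (ax := scal (/ T') (RInt (fun tau => F (tau + 1) x) 0 T')) in *.
set (ay := scal (/ T') (RInt (fun tau => F (tau + 1) y) 0 T')) in *.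
assert (hxy : norm (minus ax ay) <= (Rabs L0 + 1) * norm (minus x y)).
{ unfold ax, ay. eapply Rle_trans. apply nm_scal_minus. rewrite Rabs_right by (left; apply Rinv_0_lt_compat; lra).
  apply Rle_trans with (/ T' * ((T' - 0) * ((Rabs L0 + 1) * norm (minus x y)))).
  apply Rmult_le_compat_l. left; apply Rinv_0_lt_compat; lra.
  eapply norm_int_cst. lra. apply (is_RInt_minus _ _ _ _ _ _ (avg_int x T' ltac:(lra)) (avg_int y T' ltac:(lra))).
  intros s Hs. cbv beta. apply HL; auto. lra.
  right. field. lra. }
eapply Rle_lt_trans. apply (nm_tri _ ax). eapply Rle_lt_trans. apply Rplus_le_compat_l. apply (nm_tri _ ay).
rewrite (nm_sym _ ax). match goal with |- _ < ?A + _ => apply Rlt_le_trans with (eta / 2 + (A + eta / 2)) end. apply Rplus_lt_le_compat. exact hx. apply Rplus_le_compat. exact hxy. left; exact hy. lra.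
Qed.

Lemma Fh_cont : forall (x : E) eps, 0 < eps -> exists d, 0 < d /\ forall y, norm (minus y x) < d ->
  norm (minus (Fh y) (Fh x)) < eps.
Proof.
intros x eps He. destruct (Fh_lip (norm x + 1) ltac:(pose proof (norm_ge_0 x); lra)) as [L [HL [_ Hl]]].
exists (Rmin 1 (eps / L)). split. apply Rmin_pos. lra. apply Rdiv_lt_0_compat; lra.
intros y Hy. eapply Rle_lt_trans. apply Hl.
- eapply Rle_trans. apply (nm_tri_r _ x). assert (norm (minus y x) < 1) by (eapply Rlt_le_trans; [apply Hy| apply Rmin_l]). lra.
- lra.
- apply Rlt_le_trans with (L * (eps / L)). apply Rmult_lt_compat_l. lra.
  eapply Rlt_le_trans. apply Hy. apply Rmin_r. right. field. lra.
Qed.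

Lemma Sh_unif0 T' h y : 0 <= h <= T' -> norm (Sh h y) <= MT T' * norm y.
Proof. intros Hh. replace h with (h - 0) by ring. apply Sh_unif; lra. Qed.

Lemma Gl_cont lam : 0 < lam -> forall t (x : E), 0 <= t -> forall eps, 0 < eps -> exists d, 0 < d /\
  forall t' y, 0 <= t' -> Rabs (t' - t) < d -> norm (minus y x) < d ->
    norm (minus (F (t' / lam) y) (F (t / lam) x)) < eps.
Proof.
intros Hl t0 x Ht0 eps He. destruct (HFc (t0 / lam) x ltac:(apply Rdiv_le_0_compat; lra) eps He) as [d [Hd Hf]].
exists (Rmin d (d * lam)). split. apply Rmin_pos; nra. intros t' y Ht' Htt Hy.
apply Hf. apply Rdiv_le_0_compat; lra.
replace (t' / lam - t0 / lam) with ((t' - t0) / lam) by (field; lra).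
unfold Rdiv. rewrite Rabs_mult, Rabs_inv, (Rabs_right lam) by lra.
apply Rmult_lt_reg_r with lam. lra. rewrite Rmult_assoc, Rinv_l, Rmult_1_r by lra.
eapply Rlt_le_trans. apply Htt. rewrite Rmult_comm. apply Rmin_r.
eapply Rlt_le_trans. apply Hy. apply Rmin_l.
Qed.

Lemma Gl_lip lam : 0 < lam -> forall r, 0 < r -> exists L, forall t (x y : E), 0 <= t -> norm x <= r -> norm y <= r ->
  norm (minus (F (t / lam) x) (F (t / lam) y)) <= L * norm (minus x y).
Proof.
intros Hl r Hr. destruct (HFl r Hr) as [L HL]. exists L. intros t x y Ht Hx Hy. apply HL; auto.
apply Rdiv_le_0_compat; lra.
Qed.

Lemma Gl_growth lam : 0 < lam -> exists c', 0 < c' /\ forall t (v : E), 0 <= t -> norm (F (t / lam) v) <= c' * (1 + norm v).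
Proof. intros Hl. exists c. split; auto. intros t v Ht. apply HFg. apply Rdiv_le_0_compat; lra. Qed.

Lemma Ga_cont : forall (t : R) (x : E), 0 <= t -> forall eps, 0 < eps -> exists d, 0 < d /\
  forall (t' : R) y, 0 <= t' -> Rabs (t' - t) < d -> norm (minus y x) < d ->
    norm (minus (Fh y) (Fh x)) < eps.
Proof.
intros t x Ht eps He. destruct (Fh_cont x eps He) as [d [Hd H]]. exists d. split; auto.
Qed.

Lemma Ga_lip : forall r, 0 < r -> exists L, forall (t : R) (x y : E), 0 <= t -> norm x <= r -> norm y <= r ->
  norm (minus (Fh x) (Fh y)) <= L * norm (minus x y).
Proof. intros r Hr. destruct (Fh_lip r Hr) as [L [_ [_ H]]]. exists L. auto. Qed.

Lemma Ga_growth : exists c', 0 < c' /\ forall (t : R) (v : E), 0 <= t -> norm (Fh v) <= c' * (1 + norm v).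
Proof. exists c. split; auto. intros; apply Fh_growth. Qed.

Hypothesis HFrc : forall u : E, rel_compact (fun y => exists t, 0 <= t /\ y = F t u).

Definition Ua := fun t s => Sh (t - s).
Definition Ga := fun (_ : R) (x : E) => Fh x.

Lemma Ua_lin : forall t s, 0 <= s <= t -> is_linear (Ua t s).
Proof. intros t s Hs. apply Sh_lin. lra. Qed.

Lemma Ua_bd : forall T', exists MT', 0 < MT' /\ forall t s x, 0 <= s <= t -> t <= T' -> norm (Ua t s x) <= MT' * norm x.
Proof. intros T'. exists (MT T'). split. apply MT_pos; auto. intros. apply Sh_unif; auto. Qed.

Lemma Rl_bd lam : 0 < lam -> forall T', exists MT', 0 < MT' /\ forall t s x, 0 <= s <= t -> t <= T' -> norm (Rl lam t s x) <= MT' * norm x.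
Proof. intros Hl T'. exists (MT T'). split. apply MT_pos; auto. intros. apply Rl_unif; auto. Qed.

Lemma avg_exists (u0 : E) : mildU Ua Ga u0 (pic_lim Ua Ga u0).
Proof.
apply exists_mild. apply Ua_lin. apply Ua_bd. apply Sh_cont. apply Ga_cont. apply Ga_lip. apply Ga_growth.
Qed.

Lemma lam_exists lam (x : E) : 0 < lam -> mildU (Rl lam) (fun tau y => F (tau / lam) y) x
   (pic_lim (Rl lam) (fun tau y => F (tau / lam) y) x).
Proof.
intros Hl. apply exists_mild. intros t s; apply Rl_lin; auto. apply Rl_bd; auto. apply Rl_cont; auto.
apply Gl_cont; auto. apply Gl_lip; auto. apply Gl_growth; auto.
Qed.

Lemma convergence (lam : nat -> R) (ub : nat -> E) (u0 : E) :
  (forall n, 0 < lam n) -> is_lim_seq lam 0 ->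
  (forall eps, 0 < eps -> exists N, forall n, (N <= n)%nat -> norm (minus (ub n) u0) < eps) ->
  forall un : nat -> R -> E,
  (forall n, mild_solution (Rl (lam n)) F (lam n) (ub n) (un n)) ->
  forall T eps, 0 < T -> 0 < eps -> exists N, forall n t, (N <= n)%nat ->
    0 <= t <= T -> norm (minus (un n t) (pic_lim Ua Ga u0 t)) < eps.
Proof.
intros Hlam Hlim Hub un Hun T eps HT He.
set (u := pic_lim Ua Ga u0).
assert (Hmu : mildU Ua Ga u0 u) by apply avg_exists.
set (M1 := MT T). assert (HM1p : 0 < M1) by apply MT_pos.
assert (HRbdT : forall lam' t s y, 0 < lam' -> 0 <= s <= t -> t <= T -> norm (Rl lam' t s y) <= M1 * norm y).
{ intros. apply Rl_unif; auto. }
assert (HShT : forall t s y, 0 <= s <= t -> t <= T -> norm (Ua t s y) <= M1 * norm y).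
{ intros. apply Sh_unif; auto. }
assert (HGa_g : forall tau v, 0 <= tau -> norm (Ga tau v) <= c * (1 + norm v)).
{ intros; apply Fh_growth. }
set (Bu := 2 * (M1 * norm u0 + M1 * c * T) * exp (2 * (M1 * c) * T)).
assert (HBu := mild_bound_expl Ua Ga u0 u T M1 c ltac:(lra) HM1p Hc HShT HGa_g Hmu).
fold Bu in HBu.
set (Bn := 2 * (M1 * (norm u0 + 1) + M1 * c * T) * exp (2 * (M1 * c) * T)).
destruct (Hub 1 Rlt_0_1) as [N0 HN0].
assert (HBn : forall n t, (N0 <= n)%nat -> 0 <= t <= T -> norm (un n t) <= Bn).
{ intros n t Hn Ht.
  assert (Hm : mildU (Rl (lam n)) (fun tau y => F (tau / lam n) y) (ub n) (un n)) by exact (Hun n).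
  eapply Rle_trans. apply (mild_bound_expl (Rl (lam n)) (fun tau y => F (tau / lam n) y) (ub n) (un n) T M1 c ltac:(lra) HM1p Hc).
  { intros; apply HRbdT; auto. }
  { intros tau v Htau. apply HFg. apply Rdiv_le_0_compat; auto. }
  exact Hm. exact Ht.
  unfold Bn. assert (norm (ub n) <= norm u0 + 1).
  { eapply Rle_trans. apply (nm_tri_r _ u0). specialize (HN0 n Hn). lra. }
  assert (0 < exp (2 * (M1 * c) * T)) by apply exp_pos.
  apply Rmult_le_compat_r. lra. apply Rmult_le_compat_l. lra. apply Rplus_le_compat_r.
  apply Rmult_le_compat_l; lra. }
set (r := Rabs Bu + Rabs Bn + 1).
assert (Hr : 0 < r) by (unfold r; pose proof (Rabs_pos Bu); pose proof (Rabs_pos Bn); lra).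
assert (Hur : forall s, 0 <= s <= T -> norm (u s) <= r).
{ intros s Hs. eapply Rle_trans. apply HBu; auto. unfold r. pose proof (Rle_abs Bu); pose proof (Rabs_pos Bn); lra. }
assert (Hunr : forall n s, (N0 <= n)%nat -> 0 <= s <= T -> norm (un n s) <= r).
{ intros n s Hn Hs. eapply Rle_trans. apply HBn; auto. unfold r. pose proof (Rle_abs Bn); pose proof (Rabs_pos Bu); lra. }
destruct (Fh_lip r Hr) as [L [HL [HLF HLFh]]].
set (b := M1 * L). assert (Hb : 0 < b) by (unfold b; nra).
set (al := eps / (8 * exp (2 * b * T))).
assert (Hal : 0 < al) by (unfold al; apply Rdiv_lt_0_compat; [lra| assert (0 < exp (2 * b * T)) by apply exp_pos; lra]).
destruct (HA2 u0 T al HT Hal) as [d1 [Hd1 HA2u]].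
assert (Hcu : continuous_nonneg u) by (apply Hmu).
destruct (averaging Rl Sh F Fh u T M1 L r c HT HM1p HL Hc HRbdT
  (fun h y Hh => Sh_unif0 T h y Hh) Sh_lin (fun lam' t s Hl Hs => Rl_lin lam' t s Hl Hs)
  (proj2 (proj2 (proj2 HC0))) HA2 HLF HLFh HFrc Hcu Hur HFc
  (fun lam' t s q y Hl Hq Hs => proj1 (proj2 (proj2 (Hevo lam' Hl))) t s q y Hq Hs)
  (proj1 (proj2 (proj2 HC0))) Rl_cont Sh_cont Rl_bd Ua_bd HFg Fh_growth Fh_cont HFav al Hal)
  as [lam0 [Hlam0 Havg]].
destruct (seq_thr lam Hlim (Rmin d1 lam0) ltac:(apply Rmin_pos; auto)) as [N1 HN1].
destruct (Hub (Rmin d1 1) ltac:(apply Rmin_pos; lra)) as [N2 HN2].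
exists (max N0 (max N1 N2)). intros n t Hn Ht.
assert (Hn0 : (N0 <= n)%nat) by lia.
assert (Hln : 0 < lam n) by auto.
assert (Hl1 : lam n < d1).
{ assert (h := HN1 n ltac:(lia)). rewrite Rabs_right in h by lra. eapply Rlt_le_trans. apply h. apply Rmin_l. }
assert (Hl0 : lam n < lam0).
{ assert (h := HN1 n ltac:(lia)). rewrite Rabs_right in h by lra. eapply Rlt_le_trans. apply h. apply Rmin_r. }
assert (Hu1 : norm (minus (ub n) u0) < d1).
{ eapply Rlt_le_trans. apply HN2. lia. apply Rmin_l. }
assert (Hgr := gronwall T (al + al) b (fun s => norm (minus (un n s) (u s))) Hb ltac:(lra)).
eapply Rle_lt_trans. apply Hgr; auto.
- intros; apply norm_ge_0.
- exists (r + r). intros s Hs. eapply Rle_trans. apply nm_minus_le.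
  assert (norm (un n s) <= r) by (apply Hunr; auto). assert (norm (u s) <= r) by (apply Hur; auto). lra.
- intros m Hm Hle t' Ht'. cbv beta.
  assert (HIn := proj2 (Hun n) t' (proj1 Ht')).
  assert (HIa := proj2 Hmu t' (proj1 Ht')).
  assert (HKn := RInt_correct _ _ _ (f1_int Rl F u (fun lam' t s Hl Hs => Rl_lin lam' t s Hl Hs) Hcu HFc Rl_cont Rl_bd (lam n) t' Hln (proj1 Ht'))).
  assert (Hav := Havg (lam n) ltac:(lra) t' Ht').
  assert (HF2 : RInt (fun tau => Sh (t' - tau) (Fh (u tau))) 0 t' = minus (u t') (Ua t' 0 u0)).
  { apply is_RInt_unique. exact HIa. }
  rewrite HF2 in Hav.
  eapply Rle_trans. right. apply (f_equal norm (e_split2 (un n t') (u t') (Rl (lam n) t' 0 (ub n)) (Ua t' 0 u0))).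
  eapply Rle_trans. apply nm_plus.
  assert (H1 : norm (minus (Rl (lam n) t' 0 (ub n)) (Ua t' 0 u0)) <= al).
  { left. apply HA2u; auto; lra. }
  eapply Rle_trans. apply Rplus_le_compat_l.
  apply (nm_tri _ (RInt (fun tau => Rl (lam n) t' tau (F (tau / lam n) (u tau))) 0 t')).
  assert (Hd := is_RInt_minus _ _ _ _ _ _ HIn HKn).
  assert (H2 : norm (minus (minus (un n t') (Rl (lam n) t' 0 (ub n))) (RInt (fun tau => Rl (lam n) t' tau (F (tau / lam n) (u tau))) 0 t'))
     <= 0 * t' + b * m / (2 * b) * (exp (2 * b * t') - 1)).
  { apply (norm_int_le _ t' _ 0 (b * m) (2 * b) (proj1 Ht') ltac:(lra) Hd).
    intros tau Htau. cbv beta.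
    rewrite <- (linear_minus (K:=R_AbsRing) (U:=E) (V:=E)) by (apply Rl_lin; auto; lra).
    eapply Rle_trans. apply HRbdT; auto; lra.
    eapply Rle_trans. apply Rmult_le_compat_l. lra. apply HLF. apply Rdiv_le_0_compat; lra.
    apply Hunr; auto; lra. apply Hur; lra.
    apply Rle_trans with (M1 * (L * (m * exp (2 * b * tau)))).
    apply Rmult_le_compat_l. lra. apply Rmult_le_compat_l. lra. apply (Hle tau). lra.
    unfold b; right; ring. }
  replace (b * m / (2 * b)) with (m / 2) in H2 by (field; lra).
  assert (0 < exp (2 * b * t')) by apply exp_pos.
  eapply Rle_trans. apply Rplus_le_compat. exact H1. apply Rplus_le_compat. exact H2. exact Hav.
  nra.
- assert (exp (2 * b * t) <= exp (2 * b * T)) by (apply exp_le; nra).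
  assert (0 < exp (2 * b * T)) by apply exp_pos.
  apply Rle_lt_trans with (2 * (al + al) * exp (2 * b * T)). apply Rmult_le_compat_l; lra.
  unfold al. replace (2 * (eps / (8 * exp (2 * b * T)) + eps / (8 * exp (2 * b * T))) * exp (2 * b * T)) with (eps / 2) by (field; lra).
  lra.
Qed.

End Main.

Theorem theorem1p1 (E : CompleteNormedModule R_AbsRing)
  (Rl : R -> R -> R -> E -> E) (Sh : R -> E -> E)
  (F : R -> E -> E) (Fh : E -> E) :
  @separable E ->
  (* the evolution systems R^(lam), lam > 0 *)
  (forall lam, 0 < lam -> evolution_system (Rl lam)) ->
  (* (A1) *)
  (exists (M w : R), 1 <= M /\
     forall lam t s x, 0 < lam -> 0 <= s <= t ->
       norm (Rl lam t s x) <= M * exp (w * (t - s)) * norm x) ->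
  (* (A2) *)
  C0_semigroup Sh ->
  (forall (u : E) (T eps : R), 0 < T -> 0 < eps -> exists delta, 0 < delta /\
     forall lam (v : E) t s, 0 < lam < delta -> norm (minus v u) < delta ->
       0 <= s <= t -> t <= T ->
       norm (minus (Rl lam t s v) (Sh (t - s) u)) < eps) ->
  (* (A3) *)
  (forall t (x : E), 0 <= t -> forall eps, 0 < eps -> exists delta, 0 < delta /\
     forall t' (y : E), 0 <= t' -> Rabs (t' - t) < delta -> norm (minus y x) < delta ->
       norm (minus (F t' y) (F t x)) < eps) ->
  (forall r, 0 < r -> exists L, forall t (x y : E), 0 <= t -> norm x <= r -> norm y <= r ->
     norm (minus (F t x) (F t y)) <= L * norm (minus x y)) ->
  (exists c, 0 < c /\ forall t (v : E), 0 <= t -> norm (F t v) <= c * (1 + norm v)) ->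
  (* (A4) *)
  (forall u : E, rel_compact (fun y => exists t, 0 <= t /\ y = F t u)) ->
  (forall x : E, exists r L, 0 < r /\ forall y z : E,
     norm (minus y x) < r -> norm (minus z x) < r ->
     norm (minus (Fh y) (Fh z)) <= L * norm (minus y z)) ->
  (forall (u : E) eps, 0 < eps -> exists T0 delta, 0 < delta /\
     forall T (v : E) h, T0 < T -> 0 < T -> norm (minus v u) < delta -> 0 < h ->
       norm (minus (scal (/ T) (RInt (fun tau => F (tau + h) v) 0 T)) (Fh u)) < eps) ->
  (* conclusion *)
  forall (lam : nat -> R) (ub : nat -> E) (u0 : E),
    (forall n, 0 < lam n) -> is_lim_seq lam 0 ->
    (forall eps, 0 < eps -> exists N, forall n, (N <= n)%nat -> norm (minus (ub n) u0) < eps) ->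
    (forall n, exists un : R -> E, mild_solution (Rl (lam n)) F (lam n) (ub n) un) /\
    exists u : R -> E, mild_solution_avg Sh Fh u0 u /\
      forall un : nat -> R -> E,
        (forall n, mild_solution (Rl (lam n)) F (lam n) (ub n) (un n)) ->
        forall T eps, 0 < T -> 0 < eps -> exists N, forall n t, (N <= n)%nat ->
          0 <= t <= T -> norm (minus (un n t) (u t)) < eps.
Proof.
intros Hsep Hevo [M [w [HM1 HA1]]] HC0 HA2 HFc HFl [c [Hc HFg]] HFrc HFhloc HFav lam ub u0 Hlam Hlim Hub.
split.
- intros n. exists (pic_lim (Rl (lam n)) (fun tau y => F (tau / lam n) y) (ub n)).
  exact (lam_exists Rl F M w c Hevo HM1 HA1 HFc HFl Hc HFg (lam n) (ub n) (Hlam n)).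
- exists (pic_lim (Ua Sh) (Ga Fh) u0). split.
  + destruct (avg_exists Rl Sh F Fh M w c Hevo HM1 HA1 HC0 HA2 HFc HFl Hc HFg HFav u0) as [Hc' Hi].
    split. exact Hc'. intros t Ht. specialize (Hi t Ht). unfold Ua, Ga in Hi. rewrite Rminus_0_r in Hi. exact Hi.
  + intros un Hun T eps HT He.
    exact (convergence Rl Sh F Fh M w c Hevo HM1 HA1 HC0 HA2 HFc HFl Hc HFg HFav HFrc lam ub u0 Hlam Hlim Hub un Hun T eps HT He).
Qed.
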